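(* Let $p>2$ be real with $2n\le p\le 2n+1$ for some $n\in\mathbb{N}$, and let $u(x)=e^{ix^p}$, $x\in\mathbb{R}$, where for $x<0$ we set $x^p=e^{i\pi p}|x|^p$ (so $u\in\mathscr{S}'(\mathbb{R})$). Then $$WF(u)\subseteq\{0\}\times(\mathbb{R}\setminus\{0\}).$$
   Context: $WF$ is the Gabor wave front set: for $u\in\mathscr{S}'(\mathbb{R})$, $z_0\in T^*\mathbb{R}\setminus\{0\}$ is not in $WF(u)$ iff there is an open conic set $\Gamma\ni z_0$ with $\sup_{z\in\Gamma}\langle z\rangle^N|V_\varphi u(z)|<\infty$ for all $N\ge0$, where $V_\varphi u(x,\xi)=\int u(y)\overline{\varphi(y-x)}e^{-iy\xi}dy$, $\varphi\in\mathscr{S}(\mathbb{R})\setminus\{0\}$, $\langle z\rangle=(1+|z|^2)^{1/2}$. *)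

(* Defs.v *)
From Stdlib Require Import Reals Lra ClassicalEpsilon.
Open Scope R_scope.

Definition Cx := (R * R)%type.
Definition C0 : Cx := (0, 0).
Definition Cadd (z w : Cx) : Cx := (fst z + fst w, snd z + snd w).
Definition Cmul (z w : Cx) : Cx :=
  (fst z * fst w - snd z * snd w, fst z * snd w + snd z * fst w).
Definition Cconj (z : Cx) : Cx := (fst z, - snd z).
Definition Ci : Cx := (0, 1).
Definition Cnorm (z : Cx) : R := sqrt (fst z ^ 2 + snd z ^ 2).
Definition Cexp (z : Cx) : Cx := (exp (fst z) * cos (snd z), exp (fst z) * sin (snd z)).

Definition improper_int (f : R -> R) (l : R) : Prop :=
  forall eps, 0 < eps -> exists M, forall a b, a <= - M -> M <= b ->
    exists pr : Riemann_integrable f a b, Rabs (RiemannInt pr - l) < eps.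

Definition Rint (f : R -> R) : R :=
  epsilon (inhabits 0) (fun l => improper_int f l).

Definition Cint (f : R -> Cx) : Cx :=
  (Rint (fun y => fst (f y)), Rint (fun y => snd (f y))).

Definition is_schwartz_R (f : R -> R) : Prop :=
  exists D : nat -> R -> R,
    (forall x, D O x = f x) /\
    (forall k x, derivable_pt_lim (D k) x (D (S k) x)) /\
    (forall (a k : nat), exists K, forall x, Rabs (x ^ a * D k x) <= K).

Definition is_schwartz (phi : R -> Cx) : Prop :=
  is_schwartz_R (fun x => fst (phi x)) /\ is_schwartz_R (fun x => snd (phi x)).

Definition STFT (phi u : R -> Cx) (x xi : R) : Cx :=
  Cint (fun y => Cmul (Cmul (u y) (Cconj (phi (y - x)))) (Cexp (0, - (y * xi)))).

Definition japan (x xi : R) : R := sqrt (1 + (x ^ 2 + xi ^ 2)).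

Definition open_conic (G : R -> R -> Prop) : Prop :=
  (forall x xi, G x xi -> (x, xi) <> (0, 0)) /\
  (forall x xi, G x xi -> exists eps, 0 < eps /\
     forall y eta, (y - x) ^ 2 + (eta - xi) ^ 2 < eps ^ 2 -> G y eta) /\
  (forall x xi t, G x xi -> 0 < t -> G (t * x) (t * xi)).

Definition in_WF (phi u : R -> Cx) (x0 xi0 : R) : Prop :=
  (x0, xi0) <> (0, 0) /\
  ~ (exists G : R -> R -> Prop, open_conic G /\ G x0 xi0 /\
       forall N, 0 <= N -> exists K, forall x xi, G x xi ->
         Rpower (japan x xi) N * Cnorm (STFT phi u x xi) <= K).

Definition cpow (p x : R) : Cx :=
  if Rlt_dec 0 x then (Rpower x p, 0)
  else if Rlt_dec x 0 then Cmul (Cexp (0, PI * p)) (Rpower (- x) p, 0)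
  else C0.

Definition u_p (p : R) (x : R) : Cx := Cexp (Cmul Ci (cpow p x)).

(* Main.v *)
From Coquelicot Require Import Coquelicot.
Require Import Defs.
From Stdlib Require Import Reals Lra Lia ClassicalEpsilon.
Open Scope R_scope.

Lemma deq (f : R -> R) (x l l' : R) : is_derive f x l -> l = l' -> is_derive f x l'.
Proof. intros H ->; exact H. Qed.
Lemma dmul (f g : R -> R) (x df dg : R) : is_derive f x df -> is_derive g x dg ->
  is_derive (fun t => f t * g t) x (df * g x + f x * dg).
Proof. intros. apply (is_derive_mult f g x df dg); auto. intros; apply Rmult_comm. Qed.
Lemma dplus (f g : R -> R) (x df dg : R) : is_derive f x df -> is_derive g x dg ->
  is_derive (fun t => f t + g t) x (df + dg).
Proof. intros. apply (is_derive_plus f g x df dg); auto. Qed.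
Lemma dminus (f g : R -> R) (x df dg : R) : is_derive f x df -> is_derive g x dg ->
  is_derive (fun t => f t - g t) x (df - dg).
Proof. intros. apply (is_derive_minus f g x df dg); auto. Qed.
Lemma dcomp (f g : R -> R) x df dg : is_derive f (g x) df -> is_derive g x dg ->
  is_derive (fun t => f (g t)) x (dg * df).
Proof. intros. apply (is_derive_comp f g x df dg); auto. Qed.
Lemma dconst (a x : R) : is_derive (fun _ => a) x 0.
Proof. apply (is_derive_const (K:=R_AbsRing) (V:=R_NormedModule)). Qed.
Lemma did (x : R) : is_derive (fun t => t) x 1.
Proof. apply (is_derive_id (K:=R_AbsRing)). Qed.
Lemma dpower y a : 0 < y -> is_derive (fun t => Rpower t a) y (a * Rpower y (a-1)).
Proof. intros. apply is_derive_Reals. apply derivable_pt_lim_power; auto. Qed.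
Lemma dcont (f : R -> R) (x l : R) : is_derive f x l -> continuous f x.
Proof. intros H. apply (ex_derive_continuous (K:=R_AbsRing) (V:=R_NormedModule)). exists l; exact H. Qed.

Lemma RInt_plus' (f g : R -> R) a b : ex_RInt f a b -> ex_RInt g a b ->
  RInt (fun x => f x + g x) a b = RInt f a b + RInt g a b.
Proof. intros. apply (RInt_plus f g a b); auto. Qed.
Lemma RInt_minus' (f g : R -> R) a b : ex_RInt f a b -> ex_RInt g a b ->
  RInt (fun x => f x - g x) a b = RInt f a b - RInt g a b.
Proof. intros. apply (RInt_minus f g a b); auto. Qed.
Lemma RInt_scal' (f : R -> R) a b l : ex_RInt f a b ->
  RInt (fun x => l * f x) a b = l * RInt f a b.
Proof. intros. apply (RInt_scal f a b l); auto. Qed.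
Lemma RInt_ext' (f g : R -> R) a b : (forall x, Rmin a b < x < Rmax a b -> f x = g x) -> RInt f a b = RInt g a b.
Proof. apply RInt_ext. Qed.
Lemma exR_scal' (f : R -> R) a b l : ex_RInt f a b -> ex_RInt (fun x => l * f x) a b.
Proof. intros. apply (ex_RInt_scal (V:=R_NormedModule)); auto. Qed.
Lemma exR_minus' (f g : R -> R) a b : ex_RInt f a b -> ex_RInt g a b -> ex_RInt (fun x => f x - g x) a b.
Proof. intros. apply (ex_RInt_minus (V:=R_NormedModule)); auto. Qed.
Lemma exd_mult (f g : R -> R) y : ex_derive f y -> ex_derive g y -> ex_derive (fun t => f t * g t) y.
Proof. intros [a Ha] [b Hb]. eexists. apply dmul; eauto. Qed.
Lemma exd_plus (f g : R -> R) y : ex_derive f y -> ex_derive g y -> ex_derive (fun t => f t + g t) y.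
Proof. intros [a Ha] [b Hb]. eexists. apply dplus; eauto. Qed.
Lemma exd_minus (f g : R -> R) y : ex_derive f y -> ex_derive g y -> ex_derive (fun t => f t - g t) y.
Proof. intros [a Ha] [b Hb]. eexists. apply dminus; eauto. Qed.
Lemma exd_cont (f : R -> R) y : ex_derive f y -> continuous f y.
Proof. intros [a Ha]. eapply dcont; eauto. Qed.
Lemma exd_comp (f g : R -> R) y : ex_derive f (g y) -> ex_derive g y -> ex_derive (fun t => f (g t)) y.
Proof. intros [a Ha] [b Hb]. eexists. apply dcomp; eauto. Qed.
Lemma exd_scal (f : R -> R) k y : ex_derive f y -> ex_derive (fun t => k * f t) y.
Proof. intros [a Ha]. eexists. apply is_derive_scal; eauto. Qed.

Section Core.
Variables (p sg ep c X0 : R) (D : nat -> R -> R).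
Hypothesis hp : 2 < p.
Hypothesis hsg : sg * sg = 1.
Hypothesis hep : ep * ep = 1.
Hypothesis hD : forall k y, is_derive (D k) y (D (S k) y).

Definition dth xi y := ep * sg * p * Rpower (sg * y) (p - 1) - xi.
Definition th xi y := ep * Rpower (sg * y) p - y * xi.
Definition Mo al k j x xi y := Rpower (sg * y) al * (/ dth xi y) ^ k * D j (y - x).

Lemma d_sgy y : is_derive (fun t => sg * t) y sg.
Proof. eapply deq. apply is_derive_scal, did. ring. Qed.

Lemma d_rp y al : 0 < sg * y -> is_derive (fun t => Rpower (sg * t) al) y (sg * (al * Rpower (sg * y) (al - 1))).
Proof. intros H. apply (dcomp (fun z => Rpower z al) (fun t => sg * t)). apply dpower; auto. apply d_sgy. Qed.

Lemma d_th xi y : 0 < sg * y -> is_derive (th xi) y (dth xi y).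
Proof.
  intros H. unfold th, dth. eapply deq.
  apply dminus. apply is_derive_scal, d_rp; auto. apply dmul. apply did. apply dconst.
  cbv beta; ring.
Qed.

Lemma d_dth xi y : 0 < sg * y -> is_derive (dth xi) y (ep * p * (p - 1) * Rpower (sg * y) (p - 2)).
Proof.
  intros H. unfold dth. eapply deq.
  apply dminus. apply is_derive_scal, d_rp; auto. apply dconst.
  replace (p - 1 - 1) with (p - 2) by ring.
  transitivity (ep * p * (p - 1) * Rpower (sg * y) (p - 2) * (sg * sg)). ring. rewrite hsg; ring.
Qed.

Lemma d_Mo al k j x xi y : 0 < sg * y -> dth xi y <> 0 ->
  is_derive (Mo al k j x xi) y
   (al * sg * Mo (al - 1) k j x xi y - INR k * (ep * p * (p - 1)) * Mo (al + p - 2) (S k) j x xi y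
    + Mo al k (S j) x xi y).
Proof.
  intros H Hd. unfold Mo. eapply deq.
  apply dmul. apply dmul. apply d_rp; auto.
  apply is_derive_pow. apply is_derive_inv. apply d_dth; auto. auto.
  apply (dcomp (D j) (fun t => t - x)). apply hD. eapply deq. apply dminus. apply did. apply dconst. reflexivity.
  assert (E : Rpower (sg * y) (al + p - 2) = Rpower (sg * y) al * Rpower (sg * y) (p - 2)).
  { replace (al + p - 2) with (al + (p - 2)) by ring. apply Rpower_plus. }
  rewrite E. destruct k as [|k]; simpl; field; auto.
Qed.

Lemma exd_Mo al k j x xi y : 0 < sg * y -> dth xi y <> 0 -> ex_derive (Mo al k j x xi) y.
Proof. intros. eexists. apply d_Mo; auto. Qed.

Lemma exd_cth xi y : 0 < sg * y -> ex_derive (fun t => cos (th xi t)) y.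
Proof. intros. apply exd_comp. eexists; apply is_derive_cos. eexists; apply d_th; auto. Qed.
Lemma exd_sth xi y : 0 < sg * y -> ex_derive (fun t => sin (th xi t)) y.
Proof. intros. apply exd_comp. eexists; apply is_derive_sin. eexists; apply d_th; auto. Qed.


Definition reg xi a b := forall y, Rmin a b <= y <= Rmax a b -> 0 < sg * y /\ dth xi y <> 0.

Lemma exR_cMo xi a b al k j x : reg xi a b -> ex_RInt (fun y => cos (th xi y) * Mo al k j x xi y) a b.
Proof.
  intros H. apply (ex_RInt_continuous (V:=R_CompleteNormedModule)). intros z Hz. destruct (H z Hz).
  apply exd_cont, exd_mult. apply exd_cth; auto. apply exd_Mo; auto.
Qed.
Lemma exR_sMo xi a b al k j x : reg xi a b -> ex_RInt (fun y => sin (th xi y) * Mo al k j x xi y) a b.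
Proof.
  intros H. apply (ex_RInt_continuous (V:=R_CompleteNormedModule)). intros z Hz. destruct (H z Hz).
  apply exd_cont, exd_mult. apply exd_sth; auto. apply exd_Mo; auto.
Qed.

Lemma ibp_cos xi a b al k j x : reg xi a b ->
  RInt (fun y => cos (th xi y) * Mo al k j x xi y) a b =
  (sin (th xi b) * Mo al (S k) j x xi b - sin (th xi a) * Mo al (S k) j x xi a)
  - (al * sg * RInt (fun y => sin (th xi y) * Mo (al - 1) (S k) j x xi y) a b
     - INR (S k) * (ep * p * (p - 1)) * RInt (fun y => sin (th xi y) * Mo (al + p - 2) (S (S k)) j x xi y) a b
     + RInt (fun y => sin (th xi y) * Mo al (S k) (S j) x xi y) a b).
Proof.
  intros H.
  set (F := fun y => sin (th xi y) * Mo al (S k) j x xi y).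
  assert (K : is_RInt (fun y => cos (th xi y) * Mo al k j x xi y +
     sin (th xi y) * (al * sg * Mo (al - 1) (S k) j x xi y
        - INR (S k) * (ep * p * (p - 1)) * Mo (al + p - 2) (S (S k)) j x xi y
        + Mo al (S k) (S j) x xi y)) a b (minus (F b) (F a))).
  { apply (is_RInt_derive (V:=R_CompleteNormedModule)).
    - intros z Hz. destruct (H z Hz) as [H1 H2]. unfold F. eapply deq.
      apply dmul. apply (dcomp sin (th xi)). apply is_derive_sin. apply d_th; auto.
      apply d_Mo; auto.
      unfold Mo; simpl; field; auto.
    - intros z Hz. destruct (H z Hz) as [H1 H2]. apply exd_cont.
      apply exd_plus. apply exd_mult. apply exd_cth; auto. apply exd_Mo; auto.
      apply exd_mult. apply exd_sth; auto.
      apply exd_plus. apply exd_minus. apply exd_scal. apply exd_Mo; auto.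
      apply exd_scal. apply exd_Mo; auto. apply exd_Mo; auto. }
  apply (is_RInt_unique (V:=R_CompleteNormedModule)) in K.
  rewrite RInt_plus' in K.
  2: apply exR_cMo; auto.
  2: { apply (ex_RInt_continuous (V:=R_CompleteNormedModule)). intros z Hz. destruct (H z Hz) as [H1 H2]. apply exd_cont.
      apply exd_mult. apply exd_sth; auto.
      apply exd_plus. apply exd_minus. apply exd_scal. apply exd_Mo; auto.
      apply exd_scal. apply exd_Mo; auto. apply exd_Mo; auto. }
  rewrite (RInt_ext' (fun y => sin (th xi y) * (al * sg * Mo (al - 1) (S k) j x xi y
        - INR (S k) * (ep * p * (p - 1)) * Mo (al + p - 2) (S (S k)) j x xi y
        + Mo al (S k) (S j) x xi y)) (fun y => (al * sg * (sin (th xi y) * Mo (al - 1) (S k) j x xi y)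
        - INR (S k) * (ep * p * (p - 1)) * (sin (th xi y) * Mo (al + p - 2) (S (S k)) j x xi y))
        + sin (th xi y) * Mo al (S k) (S j) x xi y)) in K.
  2: { intros z _. cbv beta. ring. }
  rewrite RInt_plus', RInt_minus', !RInt_scal' in K.
  2,3,7: apply exR_sMo; exact H.
  2,3: apply exR_scal'; apply exR_sMo; exact H.
  2: apply exR_minus'; apply exR_scal'; apply exR_sMo; exact H.
  change (minus (F b) (F a)) with (F b - F a) in K. unfold F in K. lra.
Qed.

Lemma ibp_sin xi a b al k j x : reg xi a b ->
  RInt (fun y => sin (th xi y) * Mo al k j x xi y) a b =
  - (cos (th xi b) * Mo al (S k) j x xi b - cos (th xi a) * Mo al (S k) j x xi a)
  + (al * sg * RInt (fun y => cos (th xi y) * Mo (al - 1) (S k) j x xi y) a b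
     - INR (S k) * (ep * p * (p - 1)) * RInt (fun y => cos (th xi y) * Mo (al + p - 2) (S (S k)) j x xi y) a b
     + RInt (fun y => cos (th xi y) * Mo al (S k) (S j) x xi y) a b).
Proof.
  intros H.
  set (F := fun y => cos (th xi y) * Mo al (S k) j x xi y).
  assert (K : is_RInt (fun y => 
     cos (th xi y) * (al * sg * Mo (al - 1) (S k) j x xi y
        - INR (S k) * (ep * p * (p - 1)) * Mo (al + p - 2) (S (S k)) j x xi y
        + Mo al (S k) (S j) x xi y) - sin (th xi y) * Mo al k j x xi y) a b (minus (F b) (F a))).
  { apply (is_RInt_derive (V:=R_CompleteNormedModule)).
    - intros z Hz. destruct (H z Hz) as [H1 H2]. unfold F. eapply deq.
      apply dmul. apply (dcomp cos (th xi)). apply is_derive_cos. apply d_th; auto.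
      apply d_Mo; auto.
      unfold Mo; simpl; field; auto.
    - intros z Hz. destruct (H z Hz) as [H1 H2]. apply exd_cont.
      apply exd_minus. 
      apply exd_mult. apply exd_cth; auto.
      apply exd_plus. apply exd_minus. apply exd_scal. apply exd_Mo; auto.
      apply exd_scal. apply exd_Mo; auto. apply exd_Mo; auto.
      apply exd_mult. apply exd_sth; auto. apply exd_Mo; auto. }
  apply (is_RInt_unique (V:=R_CompleteNormedModule)) in K.
  rewrite RInt_minus' in K.
  3: apply exR_sMo; auto.
  2: { apply (ex_RInt_continuous (V:=R_CompleteNormedModule)). intros z Hz. destruct (H z Hz) as [H1 H2]. apply exd_cont.
      apply exd_mult. apply exd_cth; auto.
      apply exd_plus. apply exd_minus. apply exd_scal. apply exd_Mo; auto.
      apply exd_scal. apply exd_Mo; auto. apply exd_Mo; auto. }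
  rewrite (RInt_ext' (fun y => cos (th xi y) * (al * sg * Mo (al - 1) (S k) j x xi y
        - INR (S k) * (ep * p * (p - 1)) * Mo (al + p - 2) (S (S k)) j x xi y
        + Mo al (S k) (S j) x xi y)) (fun y => (al * sg * (cos (th xi y) * Mo (al - 1) (S k) j x xi y)
        - INR (S k) * (ep * p * (p - 1)) * (cos (th xi y) * Mo (al + p - 2) (S (S k)) j x xi y))
        + cos (th xi y) * Mo al (S k) (S j) x xi y)) in K.
  2: { intros z _. cbv beta. ring. }
  rewrite RInt_plus', RInt_minus', !RInt_scal' in K.
  2,3,7: apply exR_cMo; exact H.
  2,3: apply exR_scal'; apply exR_cMo; exact H.
  2: apply exR_minus'; apply exR_scal'; apply exR_cMo; exact H.
  change (minus (F b) (F a)) with (F b - F a) in K. unfold F in K. lra.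
Qed.



Lemma abs1 e : e * e = 1 -> Rabs e = 1.
Proof. intros H. unfold Rabs. destruct (Rcase_abs e); nra. Qed.

Lemma rp_pos r a : 0 < Rpower r a.
Proof. unfold Rpower. apply exp_pos. Qed.

Lemma window X r m : 0 < X -> X / 2 <= r <= 2 * X -> Rpower r m <= Rpower 2 (Rabs m) * Rpower X m.
Proof.
  intros HX [H1 H2]. unfold Rpower. rewrite <- exp_plus. 
  assert (L1 : ln r <= ln 2 + ln X). { rewrite <- ln_mult by lra. apply ln_le; lra. }
  assert (L2 : ln X - ln 2 <= ln r). { replace (ln X - ln 2) with (ln (X / 2)).
    apply ln_le; lra. unfold Rdiv. rewrite ln_mult, ln_Rinv by lra. ring. }
  assert (L3 : 0 <= ln 2). { rewrite <- ln_1. apply ln_le; lra. }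
  assert (m * ln r <= Rabs m * ln 2 + m * ln X).
  { unfold Rabs; destruct (Rcase_abs m); nra. }
  destruct (Rle_lt_or_eq_dec _ _ H) as [Hl|He]. left; apply exp_increasing; auto. rewrite He; right; auto.
Qed.

Hypothesis hc : 0 <= c.
Hypothesis hX0 : 2 <= X0.
Hypothesis hX : forall r, X0 / 2 <= r -> 2 * c * r <= p / 2 * Rpower r (p - 1).
Hypothesis hDb : forall k (L : nat), exists K, forall t, Rabs (D k t) * Rabs t ^ L <= K.

Definition cfg x xi a b := X0 <= Rabs x /\ Rabs xi <= c * Rabs x /\ a <= b /\
  (forall y, a <= y <= b -> Rabs x / 2 <= sg * y <= 2 * Rabs x) /\
  Rabs x / 2 <= Rabs (a - x) /\ Rabs x / 2 <= Rabs (b - x).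

Lemma dth_low x xi a b y : cfg x xi a b -> a <= y <= b ->
  p / 2 * Rpower (sg * y) (p - 1) <= Rabs (dth xi y).
Proof.
  intros (H1 & H2 & H3 & H4 & _) Hy. destruct (H4 y Hy) as [Hy1 Hy2].
  assert (E1 : Rabs ep = 1) by (apply abs1; auto). assert (E2 : Rabs sg = 1) by (apply abs1; auto).
  assert (Hr := hX (sg * y) ltac:(lra)).
  pose proof (rp_pos (sg * y) (p - 1)).
  unfold dth.
  assert (Rabs (ep * sg * p * Rpower (sg * y) (p - 1)) = p * Rpower (sg * y) (p - 1)).
  { rewrite !Rabs_mult, E1, E2, (Rabs_right p), (Rabs_right (Rpower _ _)); lra. }
  pose proof (Rabs_triang_inv (ep * sg * p * Rpower (sg * y) (p - 1)) xi).
  assert (Rabs xi <= 2 * c * (sg * y)) by nra.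
  lra.
Qed.

Lemma cfg_reg x xi a b : cfg x xi a b -> reg xi a b.
Proof.
  intros Hc y Hy. pose proof Hc as (H1 & H2 & H3 & H4 & _).
  rewrite Rmin_left, Rmax_right in Hy by lra.
  destruct (H4 y Hy). split. lra.
  pose proof (dth_low x xi a b y Hc Hy). pose proof (rp_pos (sg * y) (p - 1)).
  intro E; rewrite E, Rabs_R0 in H5. nra.
Qed.

Lemma Mo_bound x xi a b y al k j : cfg x xi a b -> a <= y <= b ->
  Rabs (Mo al k j x xi y) <=
  (2 / p) ^ k * Rpower 2 (Rabs (al - INR k * (p - 1))) * Rpower (Rabs x) (al - INR k * (p - 1)) * Rabs (D j (y - x)).
Proof.
  intros Hc Hy. pose proof Hc as (H1 & H2 & H3 & H4 & _). destruct (H4 y Hy) as [Hy1 Hy2].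
  pose proof (dth_low x xi a b y Hc Hy) as Hd.
  set (r := sg * y) in *. set (R1 := Rpower r (p - 1)) in *.
  assert (HR1 : 0 < R1) by apply rp_pos.
  assert (Hd0 : 0 < Rabs (dth xi y)) by nra.
  assert (A : Rabs ((/ dth xi y) ^ k) <= (2 / p) ^ k * Rpower r (- (INR k * (p - 1)))).
  { rewrite <- RPow_abs, Rabs_inv.
    apply Rle_trans with ((/ (p / 2 * R1)) ^ k).
    apply pow_incr. split. left; apply Rinv_0_lt_compat; auto. apply Rinv_le_contravar; nra.
    assert (E : Rpower r (INR k * (p - 1)) = R1 ^ k).
    { rewrite Rmult_comm, <- Rpower_mult. apply Rpower_pow. apply rp_pos. }
    rewrite Rpower_Ropp, E.
    rewrite Rinv_mult, Rpow_mult_distr, pow_inv. rewrite <- !pow_inv. replace (/ (p / 2)) with (2 / p) by (field; lra). lra. }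
  assert (B : Rpower r al * ((2 / p) ^ k * Rpower r (- (INR k * (p - 1)))) =
     (2 / p) ^ k * Rpower r (al - INR k * (p - 1))).
  { unfold Rminus. rewrite (Rpower_plus al). ring. }
  assert (W := window (Rabs x) r (al - INR k * (p - 1)) ltac:(lra) ltac:(lra)).
  unfold Mo. fold r. rewrite !Rabs_mult.
  rewrite (Rabs_right (Rpower r al)) by (left; apply rp_pos).
  pose proof (rp_pos r al). pose proof (pow_le (2/p) k ltac:(left; apply Rdiv_lt_0_compat; lra)).
  pose proof (Rabs_pos (D j (y - x))). pose proof (Rabs_pos ((/ dth xi y) ^ k)).
  apply Rle_trans with (Rpower r al * ((2 / p) ^ k * Rpower r (- (INR k * (p - 1)))) * Rabs (D j (y - x))).
  apply Rmult_le_compat_r; auto. apply Rmult_le_compat_l; lra.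
  rewrite B. rewrite !Rmult_assoc. apply Rmult_le_compat_l; auto. rewrite <- Rmult_assoc.
  apply Rmult_le_compat_r; auto.
Qed.


Lemma cfg_ba x xi a b : cfg x xi a b -> b - a <= 2 * Rabs x.
Proof.
  intros (H1 & H2 & H3 & H4 & _).
  destruct (H4 a ltac:(lra)), (H4 b ltac:(lra)).
  assert (E2 : Rabs sg = 1) by (apply abs1; auto).
  assert (HH : Rabs (sg * b - sg * a) <= 2 * Rabs x) by (apply Rabs_le; lra).
  replace (sg * b - sg * a) with (sg * (b - a)) in HH by ring.
  rewrite Rabs_mult, E2, Rabs_right in HH by lra. lra.
Qed.

Definition Qc N := forall j k al, exists C, 0 <= C /\ forall x xi a b, cfg x xi a b ->
  Rabs (RInt (fun y => cos (th xi y) * Mo al k j x xi y) a b) <= C * Rpower (Rabs x) (al - INR k * (p - 1) + 1 - INR N) /\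
  Rabs (RInt (fun y => sin (th xi y) * Mo al k j x xi y) a b) <= C * Rpower (Rabs x) (al - INR k * (p - 1) + 1 - INR N).

Lemma trig_bound (t : R) (f : R -> R) y B : Rabs (f y) <= B -> Rabs (t * f y) <= B \/ True.
Proof. auto. Qed.

Lemma Q0 : Qc 0.
Proof.
  intros j k al. destruct (hDb j 0) as [K HK].
  assert (HK' : forall t, Rabs (D j t) <= K) by (intro t; specialize (HK t); simpl in HK; lra).
  set (m := al - INR k * (p - 1)).
  set (C0 := (2 / p) ^ k * Rpower 2 (Rabs m)).
  assert (HC0 : 0 <= C0) by (unfold C0; apply Rmult_le_pos; [apply pow_le; apply Rlt_le, Rdiv_lt_0_compat; lra | left; apply rp_pos]).
  assert (HK0 : 0 <= K) by (specialize (HK' 0); pose proof (Rabs_pos (D j 0)); lra).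
  exists (2 * C0 * K). split. nra.
  intros x xi a b Hc. pose proof Hc as (H1 & H2 & H3 & H4 & _).
  pose proof (cfg_ba x xi a b Hc).
  assert (Hx : 0 < Rabs x) by lra.
  assert (E : C0 * Rpower (Rabs x) m * K * (b - a) <= 2 * C0 * K * Rpower (Rabs x) (m + 1 - INR 0)).
  { replace (m + 1 - INR 0) with (m + 1) by (simpl; ring). rewrite Rpower_plus, Rpower_1 by auto.
    pose proof (rp_pos (Rabs x) m). 
    assert (0 <= C0 * Rpower (Rabs x) m * K) by (apply Rmult_le_pos; [apply Rmult_le_pos|]; lra).
    nra. }
  assert (Hpt : forall t, a <= t <= b -> Rabs (Mo al k j x xi t) <= C0 * Rpower (Rabs x) m * K).
  { intros t Ht. eapply Rle_trans. apply (Mo_bound x xi a b t al k j Hc Ht). fold m. fold C0.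
    apply Rmult_le_compat_l. apply Rmult_le_pos; auto. left; apply rp_pos. auto. }
  split.
  - eapply Rle_trans. apply abs_RInt_le_const with (M := C0 * Rpower (Rabs x) m * K); auto.
    apply exR_cMo, cfg_reg with x; auto.
    intros t Ht. rewrite Rabs_mult. pose proof (COS_bound (th xi t)). pose proof (Hpt t Ht).
    pose proof (Rabs_pos (cos (th xi t))). pose proof (Rabs_pos (Mo al k j x xi t)).
    apply Rle_trans with (1 * Rabs (Mo al k j x xi t)). apply Rmult_le_compat_r; auto. 
    apply Rabs_le; auto. lra.
    lra.
  - eapply Rle_trans. apply abs_RInt_le_const with (M := C0 * Rpower (Rabs x) m * K); auto.
    apply exR_sMo, cfg_reg with x; auto.
    intros t Ht. rewrite Rabs_mult. pose proof (SIN_bound (th xi t)). pose proof (Hpt t Ht).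
    pose proof (Rabs_pos (sin (th xi t))). pose proof (Rabs_pos (Mo al k j x xi t)).
    apply Rle_trans with (1 * Rabs (Mo al k j x xi t)). apply Rmult_le_compat_r; auto. 
    apply Rabs_le; auto. lra.
    lra.
Qed.

Lemma tri5 A B u v w s1 s2 : Rabs (A - B - (s1 * u - s2 * v + w)) <=
  Rabs A + Rabs B + Rabs s1 * Rabs u + Rabs s2 * Rabs v + Rabs w.
Proof.
  rewrite <- !Rabs_mult.
  eapply Rle_trans. apply Rabs_triang. rewrite Rabs_Ropp.
  eapply Rle_trans. apply Rplus_le_compat. apply Rabs_triang. apply Rabs_triang.
  rewrite Rabs_Ropp.
  eapply Rle_trans. apply Rplus_le_compat_l. apply Rplus_le_compat_r. apply Rabs_triang.
  rewrite Rabs_Ropp. lra.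
Qed.
Lemma tri5' A B u v w s1 s2 : Rabs (- (A - B) + (s1 * u - s2 * v + w)) <=
  Rabs A + Rabs B + Rabs s1 * Rabs u + Rabs s2 * Rabs v + Rabs w.
Proof.
  replace (- (A - B) + (s1 * u - s2 * v + w)) with (- (A - B - (s1 * u - s2 * v + w))) by ring.
  rewrite Rabs_Ropp. apply tri5.
Qed.

Lemma Dtail j N K t X : (forall t, Rabs (D j t) * Rabs t ^ N <= K) -> 0 < X -> X / 2 <= Rabs t ->
  Rabs (D j t) <= K * 2 ^ N * Rpower X (- INR N).
Proof.
  intros HK HX Ht. rewrite Rpower_Ropp, Rpower_pow by auto.
  assert (P : 0 < (X / 2) ^ N) by (apply pow_lt; lra).
  assert (Q : (X / 2) ^ N <= Rabs t ^ N) by (apply pow_incr; lra).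
  specialize (HK t). pose proof (Rabs_pos (D j t)).
  assert (Rabs (D j t) * (X / 2) ^ N <= K) by nra.
  replace (K * 2 ^ N * / X ^ N) with (K / (X / 2) ^ N).
  apply Rmult_le_reg_r with ((X / 2) ^ N); auto. unfold Rdiv. rewrite Rmult_assoc, Rinv_l; lra.
  unfold Rdiv. rewrite Rpow_mult_distr, pow_inv. field. split; apply pow_nonzero; lra.
Qed.

Lemma bdry_bound x xi a b y al k j N K : cfg x xi a b -> a <= y <= b -> Rabs x / 2 <= Rabs (y - x) ->
  (forall t, Rabs (D j t) * Rabs t ^ N <= K) ->
  Rabs (Mo al (S k) j x xi y) <=
  ((2 / p) ^ (S k) * Rpower 2 (Rabs (al - INR (S k) * (p - 1))) * (K * 2 ^ N)) *
   Rpower (Rabs x) (al - INR k * (p - 1) - INR N).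
Proof.
  intros Hc Hy Hyx HK. pose proof Hc as (H1 & H2 & H3 & H4 & _).
  assert (Hx : 1 <= Rabs x) by lra.
  eapply Rle_trans. apply (Mo_bound x xi a b y al (S k) j Hc Hy).
  pose proof (Dtail j N K (y - x) (Rabs x) HK ltac:(lra) Hyx) as T.
  set (c1 := (2 / p) ^ S k * Rpower 2 (Rabs (al - INR (S k) * (p - 1)))).
  assert (Hc1 : 0 <= c1) by (unfold c1; apply Rmult_le_pos; [apply pow_le; apply Rlt_le, Rdiv_lt_0_compat; lra | left; apply rp_pos]).
  assert (Rpower (Rabs x) (al - INR (S k) * (p - 1)) * Rpower (Rabs x) (- INR N) <=
          Rpower (Rabs x) (al - INR k * (p - 1) - INR N)).
  { rewrite <- Rpower_plus. apply Rle_Rpower; auto. rewrite S_INR. nra. }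
  pose proof (rp_pos (Rabs x) (al - INR (S k) * (p - 1))).
  pose proof (rp_pos (Rabs x) (- INR N)).
  assert (0 <= K) by (specialize (HK 0); pose proof (Rabs_pos (D j 0)); simpl in HK;
     destruct N; simpl in HK; [lra| rewrite Rabs_R0 in HK; nra]).
  pose proof (pow_lt 2 N ltac:(lra)).
  apply Rle_trans with (c1 * Rpower (Rabs x) (al - INR (S k) * (p - 1)) * (K * 2 ^ N * Rpower (Rabs x) (- INR N))).
  apply Rmult_le_compat_l; auto. apply Rmult_le_pos; lra.
  replace (c1 * Rpower (Rabs x) (al - INR (S k) * (p - 1)) * (K * 2 ^ N * Rpower (Rabs x) (- INR N)))
    with ((c1 * (K * 2 ^ N)) * (Rpower (Rabs x) (al - INR (S k) * (p - 1)) * Rpower (Rabs x) (- INR N))) by ring.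
  apply Rmult_le_compat_l; auto. apply Rmult_le_pos; auto. apply Rmult_le_pos; lra.
Qed.

Lemma QS N : Qc N -> Qc (S N).
Proof.
  intros HQ j k al.
  destruct (HQ j (S k) (al - 1)) as [C1 [HC1 Q1]].
  destruct (HQ j (S (S k)) (al + p - 2)) as [C2 [HC2 Q2]].
  destruct (HQ (S j) (S k) al) as [C3 [HC3 Q3]].
  destruct (hDb j N) as [K HK].
  set (Cb := (2 / p) ^ (S k) * Rpower 2 (Rabs (al - INR (S k) * (p - 1))) * (K * 2 ^ N)).
  assert (HK0 : 0 <= K) by (specialize (HK 0); pose proof (Rabs_pos (D j 0)); simpl in HK;
     destruct N; simpl in HK; [lra| rewrite Rabs_R0 in HK; nra]).
  assert (HCb : 0 <= Cb).
  { unfold Cb. apply Rmult_le_pos. apply Rmult_le_pos. apply pow_le; apply Rlt_le, Rdiv_lt_0_compat; lra.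
    left; apply rp_pos. apply Rmult_le_pos; auto. apply pow_le; lra. }
  assert (Hs : 0 <= INR (S k) * (p * (p - 1))) by (apply Rmult_le_pos; [apply pos_INR| nra]).
  exists (2 * Cb + Rabs al * C1 + INR (S k) * (p * (p - 1)) * C2 + C3).
  split. pose proof (Rabs_pos al). nra.
  intros x xi a b Hc. pose proof Hc as (H1 & H2 & H3 & H4 & H5 & H6).
  assert (Hx : 1 <= Rabs x) by lra.
  set (E := Rpower (Rabs x) (al - INR k * (p - 1) + 1 - INR (S N))).
  assert (HE : 0 <= E) by (left; apply rp_pos).
  assert (EE : al - INR k * (p - 1) + 1 - INR (S N) = al - INR k * (p - 1) - INR N) by (rewrite S_INR; ring).
  assert (B1 : forall y, y = a \/ y = b -> Rabs (Mo al (S k) j x xi y) <= Cb * E).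
  { intros y Hy. unfold E. rewrite EE. apply bdry_bound with a b; auto.
    destruct Hy; subst; lra. destruct Hy; subst; auto. }
  destruct (Q1 x xi a b Hc) as [Q1c Q1s].
  destruct (Q2 x xi a b Hc) as [Q2c Q2s].
  destruct (Q3 x xi a b Hc) as [Q3c Q3s].
  assert (M1 : C1 * Rpower (Rabs x) (al - 1 - INR (S k) * (p - 1) + 1 - INR N) <= C1 * E).
  { apply Rmult_le_compat_l; auto. unfold E. apply Rle_Rpower; auto. rewrite !S_INR. nra. }
  assert (M2 : C2 * Rpower (Rabs x) (al + p - 2 - INR (S (S k)) * (p - 1) + 1 - INR N) <= C2 * E).
  { apply Rmult_le_compat_l; auto. unfold E. apply Rle_Rpower; auto. rewrite !S_INR. nra. }
  assert (M3 : C3 * Rpower (Rabs x) (al - INR (S k) * (p - 1) + 1 - INR N) <= C3 * E).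
  { apply Rmult_le_compat_l; auto. unfold E. apply Rle_Rpower; auto. rewrite !S_INR. nra. }
  assert (Esg : Rabs (al * sg) = Rabs al) by (rewrite Rabs_mult, (abs1 sg hsg); ring).
  assert (Eep : Rabs (INR (S k) * (ep * p * (p - 1))) = INR (S k) * (p * (p - 1))).
  { rewrite !Rabs_mult, (abs1 ep hep), (Rabs_right (INR (S k))), (Rabs_right p), (Rabs_right (p - 1)) by
      (try apply Rle_ge, pos_INR; lra). ring. }
  pose proof (Rabs_pos al).
  assert (TS : forall t, Rabs (sin t) <= 1) by (intro t; apply Rabs_le, SIN_bound).
  assert (TC : forall t, Rabs (cos t) <= 1) by (intro t; apply Rabs_le, COS_bound).
  assert (Tm : forall u v B, Rabs u <= 1 -> Rabs v <= B -> Rabs (u * v) <= B).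
  { intros u v B Hu Hv. rewrite Rabs_mult. pose proof (Rabs_pos u). pose proof (Rabs_pos v). nra. }
  split.
  - rewrite ibp_cos by (apply cfg_reg with x; auto).
    eapply Rle_trans. apply tri5. rewrite Esg, Eep.
    assert (Rabs (sin (th xi b) * Mo al (S k) j x xi b) <= Cb * E) by (apply Tm; auto).
    assert (Rabs (sin (th xi a) * Mo al (S k) j x xi a) <= Cb * E) by (apply Tm; auto).
    assert (Rabs al * Rabs (RInt (fun y => sin (th xi y) * Mo (al - 1) (S k) j x xi y) a b) <= Rabs al * (C1 * E))
      by (apply Rmult_le_compat_l; lra).
    assert (INR (S k) * (p * (p - 1)) * Rabs (RInt (fun y => sin (th xi y) * Mo (al + p - 2) (S (S k)) j x xi y) a b)
       <= INR (S k) * (p * (p - 1)) * (C2 * E)) by (apply Rmult_le_compat_l; lra).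
    lra.
  - rewrite ibp_sin by (apply cfg_reg with x; auto).
    eapply Rle_trans. apply tri5'. rewrite Esg, Eep.
    assert (Rabs (cos (th xi b) * Mo al (S k) j x xi b) <= Cb * E) by (apply Tm; auto).
    assert (Rabs (cos (th xi a) * Mo al (S k) j x xi a) <= Cb * E) by (apply Tm; auto).
    assert (Rabs al * Rabs (RInt (fun y => cos (th xi y) * Mo (al - 1) (S k) j x xi y) a b) <= Rabs al * (C1 * E))
      by (apply Rmult_le_compat_l; lra).
    assert (INR (S k) * (p * (p - 1)) * Rabs (RInt (fun y => cos (th xi y) * Mo (al + p - 2) (S (S k)) j x xi y) a b)
       <= INR (S k) * (p * (p - 1)) * (C2 * E)) by (apply Rmult_le_compat_l; lra).
    lra.
Qed.

Lemma Qall N : Qc N.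
Proof. induction N. apply Q0. apply QS; auto. Qed.

End Core.

Definition Cont (f : R -> R) := forall y, continuous f y.

Lemma exR (f : R -> R) a b : Cont f -> ex_RInt f a b.
Proof. intros H. apply (ex_RInt_continuous (V:=R_CompleteNormedModule)). intros; apply H. Qed.

Lemma atan_int x a b : a <= b -> RInt (fun y => / (1 + (y - x) ^ 2)) a b <= PI.
Proof.
  intros Hab.
  assert (K : is_RInt (fun y => / (1 + (y - x) ^ 2)) a b (minus (atan (b - x)) (atan (a - x)))).
  { apply (is_RInt_derive (V:=R_CompleteNormedModule) (fun y => atan (y - x))).
    - intros z _. eapply deq. apply (dcomp atan (fun t => t - x)). apply is_derive_Reals, derivable_pt_lim_atan.
      eapply deq. apply dminus. apply did. apply dconst. reflexivity. cbv beta. ring.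
    - intros z _. apply (continuous_comp (fun t => 1 + (t - x) ^ 2) Rinv).
      apply exd_cont. eexists. eapply deq. apply dplus. apply dconst. apply is_derive_pow.
      eapply deq. apply dminus. apply did. apply dconst. reflexivity. reflexivity.
      apply continuity_pt_filterlim. apply continuity_pt_inv. apply continuity_pt_id.
      pose proof (pow2_ge_0 (z - x)). lra. }
  apply (is_RInt_unique (V:=R_CompleteNormedModule)) in K.
  change (minus (atan (b - x)) (atan (a - x))) with (atan (b - x) - atan (a - x)) in K.
  rewrite K. pose proof (atan_bound (b - x)). pose proof (atan_bound (a - x)). lra.
Qed.

Lemma cont_lorentz x B : Cont (fun y => B / (1 + (y - x) ^ 2)).
Proof.
  intros z. apply exd_cont. eexists. unfold Rdiv. apply is_derive_scal.
  apply is_derive_inv. eapply deq. apply dplus. apply dconst. apply is_derive_pow.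
  eapply deq. apply dminus. apply did. apply dconst. reflexivity. reflexivity.
  pose proof (pow2_ge_0 (z - x)). lra.
Qed.

Lemma tail_bound (f : R -> R) x E a b : Cont f -> a <= b -> 0 <= E ->
  (forall y, a <= y <= b -> Rabs (f y) <= E / (1 + (y - x) ^ 2)) ->
  Rabs (RInt f a b) <= E * PI.
Proof.
  intros Hf Hab HE H.
  assert (Hl := cont_lorentz x E).
  assert (I1 : RInt f a b <= RInt (fun y => E / (1 + (y - x) ^ 2)) a b).
  { apply RInt_le; auto using exR. intros y Hy. specialize (H y ltac:(lra)). apply Rabs_le_between in H. lra. }
  assert (I2 : RInt (fun y => - (E / (1 + (y - x) ^ 2))) a b <= RInt f a b).
  { apply RInt_le; auto using exR. apply exR. intros z. apply (continuous_opp (K:=R_AbsRing) (V:=R_NormedModule)). apply Hl.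
    intros y Hy. specialize (H y ltac:(lra)). apply Rabs_le_between in H. lra. }
  assert (E1 : RInt (fun y => E / (1 + (y - x) ^ 2)) a b = E * RInt (fun y => / (1 + (y - x) ^ 2)) a b).
  { rewrite <- RInt_scal'. apply RInt_ext'. intros; unfold Rdiv; ring. apply exR. intros z.
    apply exd_cont. eexists. apply is_derive_inv. eapply deq. apply dplus. apply dconst. apply is_derive_pow.
    eapply deq. apply dminus. apply did. apply dconst. reflexivity. reflexivity.
    pose proof (pow2_ge_0 (z - x)). lra. }
  assert (E2 : RInt (fun y => - (E / (1 + (y - x) ^ 2))) a b = - RInt (fun y => E / (1 + (y - x) ^ 2)) a b).
  { replace (- RInt (fun y => E / (1 + (y - x) ^ 2)) a b) with (-1 * RInt (fun y => E / (1 + (y - x) ^ 2)) a b) by ring.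
    rewrite <- (RInt_scal' _ _ _ (-1)). apply RInt_ext'. intros; ring. apply exR, Hl. }
  pose proof (atan_int x a b Hab).
  assert (0 <= RInt (fun y => / (1 + (y - x) ^ 2)) a b).
  { apply RInt_ge_0; auto. apply exR. intros z. apply exd_cont. eexists. apply is_derive_inv. eapply deq. apply dplus. apply dconst. apply is_derive_pow.
    eapply deq. apply dminus. apply did. apply dconst. reflexivity. reflexivity.
    pose proof (pow2_ge_0 (z - x)). lra.
    intros. left. apply Rinv_0_lt_compat. pose proof (pow2_ge_0 (x0 - x)). lra. }
  apply Rabs_le. nra.
Qed.

Definition IMP (f : R -> R) l := forall eps, 0 < eps -> exists M, 0 <= M /\
  forall a b, a <= - M -> M <= b -> Rabs (RInt f a b - l) < eps.

Lemma Chasles' (f : R -> R) a b c : Cont f -> RInt f a b + RInt f b c = RInt f a c.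
Proof. intros H. apply (RInt_Chasles (V:=R_CompleteNormedModule)); apply exR; auto. Qed.

Lemma imp_mono (h : R -> R) S : Cont h -> (forall y, 0 <= h y) ->
  (forall a b, a <= b -> RInt h a b <= S) -> exists l, IMP h l.
Proof.
  intros Hc Hp HS.
  assert (mono : forall a b, a <= b -> 0 <= RInt h a b).
  { intros. apply RInt_ge_0; auto using exR. }
  set (Eb := fun v => exists b, 0 <= b /\ v = RInt h 0 b).
  set (Ea := fun v => exists a, a <= 0 /\ v = RInt h a 0).
  destruct (completeness Eb) as [U [HU1 HU2]].
  { exists S. intros v [b [Hb ->]]. apply HS; auto. }
  { exists (RInt h 0 0). exists 0. split; auto; lra. }
  destruct (completeness Ea) as [L [HL1 HL2]].
  { exists S. intros v [a [Ha ->]]. apply HS; auto. }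
  { exists (RInt h 0 0). exists 0. split; auto; lra. }
  exists (L + U). intros eps Heps.
  assert (Hb0 : exists b0, 0 <= b0 /\ U - eps / 2 < RInt h 0 b0).
  { apply NNPP. intro N. assert (U <= U - eps / 2). apply HU2. intros v [b [Hb ->]].
    apply Rnot_lt_le. intro. apply N. exists b. auto. lra. }
  assert (Ha0 : exists a0, a0 <= 0 /\ L - eps / 2 < RInt h a0 0).
  { apply NNPP. intro N. assert (L <= L - eps / 2). apply HL2. intros v [a [Ha ->]].
    apply Rnot_lt_le. intro. apply N. exists a. auto. lra. }
  destruct Hb0 as [b0 [Hb0 Hb0']]. destruct Ha0 as [a0 [Ha0 Ha0']].
  exists (Rmax b0 (- a0)). split. apply Rle_trans with b0; auto; apply Rmax_l.
  intros a b Ha Hb.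
  pose proof (Rmax_l b0 (- a0)). pose proof (Rmax_r b0 (- a0)).
  rewrite <- (Chasles' h a 0 b) by auto.
  assert (RInt h 0 b <= U) by (apply HU1; exists b; split; auto; lra).
  assert (RInt h a 0 <= L) by (apply HL1; exists a; split; auto; lra).
  assert (RInt h 0 b0 <= RInt h 0 b).
  { rewrite <- (Chasles' h 0 b0 b) by auto. pose proof (mono b0 b ltac:(lra)). lra. }
  assert (RInt h a0 0 <= RInt h a 0).
  { rewrite <- (Chasles' h a a0 0) by auto. pose proof (mono a a0 ltac:(lra)). lra. }
  apply Rabs_def1; lra.
Qed.

Lemma imp_minus (f g : R -> R) l1 l2 : Cont f -> Cont g -> IMP f l1 -> IMP g l2 ->
  IMP (fun y => f y - g y) (l1 - l2).
Proof.
  intros Hf Hg H1 H2 eps Heps.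
  destruct (H1 (eps / 2) ltac:(lra)) as [M1 [HM1 K1]].
  destruct (H2 (eps / 2) ltac:(lra)) as [M2 [HM2 K2]].
  exists (Rmax M1 M2). split. apply Rle_trans with M1; auto; apply Rmax_l.
  intros a b Ha Hb. pose proof (Rmax_l M1 M2). pose proof (Rmax_r M1 M2).
  rewrite RInt_minus' by auto using exR.
  specialize (K1 a b ltac:(lra) ltac:(lra)). specialize (K2 a b ltac:(lra) ltac:(lra)).
  apply Rabs_def2 in K1. apply Rabs_def2 in K2. apply Rabs_def1; lra.
Qed.

Lemma imp_ext (f g : R -> R) l : (forall y, f y = g y) -> IMP f l -> IMP g l.
Proof.
  intros E H eps Heps. destruct (H eps Heps) as [M [HM K]]. exists M. split; auto.
  intros a b Ha Hb. rewrite <- (RInt_ext' f g). auto. intros; auto.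
Qed.

Lemma imp_improper (f : R -> R) l : Cont f -> IMP f l -> improper_int f l.
Proof.
  intros Hf H eps Heps. destruct (H eps Heps) as [M [HM K]]. exists M.
  intros a b Ha Hb. exists (ex_RInt_Reals_0 _ _ _ (exR f a b Hf)).
  rewrite <- RInt_Reals. apply K; auto.
Qed.

Lemma Rint_spec (f : R -> R) B : Cont f -> 0 <= B -> (forall y, Rabs (f y) <= B / (1 + (y - 0) ^ 2) \/ False) -> True.
Proof. auto. Qed.

Lemma imp_main (f : R -> R) x B E lo hi : Cont f -> lo <= hi -> 0 <= E -> 0 <= B ->
  (forall y, Rabs (f y) <= B / (1 + (y - x) ^ 2)) ->
  (forall y, y <= lo \/ hi <= y -> Rabs (f y) <= E / (1 + (y - x) ^ 2)) ->
  Rabs (Rint f - RInt f lo hi) <= 8 * E.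
Proof.
  intros Hf Hlh HE HB H1 H2.
  set (g := fun y => B / (1 + (y - x) ^ 2)).
  assert (Hg : Cont g) by apply cont_lorentz.
  assert (Hh : Cont (fun y => f y + g y)).
  { intros z. apply (continuous_plus (K:=R_AbsRing) (V:=R_NormedModule)); auto. }
  assert (Hpos : forall y, 0 < 1 + (y - x) ^ 2) by (intro y; pose proof (pow2_ge_0 (y - x)); lra).
  destruct (imp_mono (fun y => f y + g y) (2 * B * PI) Hh) as [l1 Hl1].
  { intros y. specialize (H1 y). apply Rabs_le_between in H1. unfold g. lra. }
  { intros a b Hab. eapply Rle_trans. apply Rle_abs. apply tail_bound with x; auto. lra.
    intros y _. specialize (H1 y). unfold g. rewrite Rabs_right. apply Rabs_le_between in H1.
    unfold Rdiv in *. lra. apply Rabs_le_between in H1. unfold Rdiv in *; lra. }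
  destruct (imp_mono g (B * PI) Hg) as [l2 Hl2].
  { intros y. unfold g. apply Rmult_le_pos; auto. left; apply Rinv_0_lt_compat; auto. }
  { intros a b Hab. eapply Rle_trans. apply Rle_abs. apply tail_bound with x; auto.
    intros y _. unfold g. rewrite Rabs_right. lra. apply Rle_ge, Rmult_le_pos; auto. left; apply Rinv_0_lt_compat; auto. }
  assert (Hi : improper_int f (l1 - l2)).
  { apply imp_improper; auto. eapply imp_ext; [| apply (imp_minus (fun y => f y + g y) g l1 l2); eauto].
    intros; cbv beta; ring. }
  assert (Hr : improper_int f (Rint f)).
  { unfold Rint. apply epsilon_spec. exists (l1 - l2); auto. }
  apply le_epsilon. intros eps Heps.
  destruct (Hr eps Heps) as [M HM].
  set (a := Rmin (- Rabs M) lo). set (b := Rmax (Rabs M) hi).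
  assert (a <= - M) by (unfold a; pose proof (Rmin_l (- Rabs M) lo); pose proof (Rle_abs M); lra).
  assert (M <= b) by (unfold b; pose proof (Rmax_l (Rabs M) hi); pose proof (Rle_abs M); lra).
  assert (Ha : a <= lo) by apply Rmin_r. assert (Hb : hi <= b) by apply Rmax_r.
  destruct (HM a b) as [pr Hpr]; auto.
  rewrite <- RInt_Reals in Hpr.
  rewrite <- (Chasles' f a lo b), <- (Chasles' f lo hi b) in Hpr by auto.
  assert (T1 : Rabs (RInt f a lo) <= E * PI).
  { apply tail_bound with x; auto. intros; apply H2; lra. }
  assert (T2 : Rabs (RInt f hi b) <= E * PI).
  { apply tail_bound with x; auto. intros; apply H2; lra. }
  pose proof PI_4. pose proof PI_RGT_0.
  apply Rabs_le_between in T1. apply Rabs_le_between in T2. apply Rabs_def2 in Hpr.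
  apply Rabs_le. nra.
Qed.

Lemma cplus (f g : R -> R) y : continuous f y -> continuous g y -> continuous (fun t => f t + g t) y.
Proof. intros. apply (continuous_plus (K:=R_AbsRing) (V:=R_NormedModule)); auto. Qed.
Lemma cminus (f g : R -> R) y : continuous f y -> continuous g y -> continuous (fun t => f t - g t) y.
Proof. intros. apply (continuous_minus (K:=R_AbsRing) (V:=R_NormedModule) f g); auto. Qed.
Lemma cmult (f g : R -> R) y : continuous f y -> continuous g y -> continuous (fun t => f t * g t) y.
Proof. intros. apply (continuous_mult (K:=R_AbsRing) f g); auto. Qed.
Lemma copp (f : R -> R) y : continuous f y -> continuous (fun t => - f t) y.
Proof. intros. apply (continuous_opp (K:=R_AbsRing) (V:=R_NormedModule) f); auto. Qed.

Lemma cont_integrand (U P E : R -> Cx) y :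
  continuous (fun t => fst (U t)) y -> continuous (fun t => snd (U t)) y ->
  continuous (fun t => fst (P t)) y -> continuous (fun t => snd (P t)) y ->
  continuous (fun t => fst (E t)) y -> continuous (fun t => snd (E t)) y ->
  continuous (fun t => fst (Cmul (Cmul (U t) (Cconj (P t))) (E t))) y /\
  continuous (fun t => snd (Cmul (Cmul (U t) (Cconj (P t))) (E t))) y.
Proof.
  intros. unfold Cmul, Cconj; simpl. split.
  apply cminus; apply cmult; auto; [apply cminus | apply cplus]; apply cmult; auto; apply copp; auto.
  apply cplus; apply cmult; auto; [apply cminus | apply cplus]; apply cmult; auto; apply copp; auto.
Qed.

Lemma bound_integrand (U P E : Cx) w : 0 <= w ->
  Rabs (fst U) <= w -> Rabs (snd U) <= w -> Rabs (fst E) <= 1 -> Rabs (snd E) <= 1 ->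
  Rabs (fst (Cmul (Cmul U (Cconj P)) E)) <= 2 * w * (Rabs (fst P) + Rabs (snd P)) /\
  Rabs (snd (Cmul (Cmul U (Cconj P)) E)) <= 2 * w * (Rabs (fst P) + Rabs (snd P)).
Proof.
  destruct U as [u1 u2], P as [p1 p2], E as [e1 e2]. unfold Cmul, Cconj; simpl. intros Hw H1 H2 H3 H4.
  assert (Tm : forall a b A B, Rabs a <= A -> Rabs b <= B -> Rabs (a * b) <= A * B).
  { intros a b A B Ha Hb. rewrite Rabs_mult. apply Rmult_le_compat; auto using Rabs_pos. }
  assert (X1 : Rabs (u1 * p1 - u2 * - p2) <= w * (Rabs p1 + Rabs p2)).
  { eapply Rle_trans. apply Rabs_triang. rewrite Rabs_Ropp.
    pose proof (Tm u1 p1 w (Rabs p1) H1 (Rle_refl _)). pose proof (Tm u2 (- p2) w (Rabs p2) H2 ltac:(rewrite Rabs_Ropp; lra)). lra. }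
  assert (X2 : Rabs (u1 * - p2 + u2 * p1) <= w * (Rabs p1 + Rabs p2)).
  { eapply Rle_trans. apply Rabs_triang.
    pose proof (Tm u2 p1 w (Rabs p1) H2 (Rle_refl _)). pose proof (Tm u1 (- p2) w (Rabs p2) H1 ltac:(rewrite Rabs_Ropp; lra)). lra. }
  pose proof (Tm _ _ _ _ X1 H3). pose proof (Tm _ _ _ _ X2 H4).
  pose proof (Tm _ _ _ _ X1 H4). pose proof (Tm _ _ _ _ X2 H3).
  split.
  - eapply Rle_trans. apply Rabs_triang. rewrite Rabs_Ropp. lra.
  - eapply Rle_trans. apply Rabs_triang. lra.
Qed.

Lemma sch_data (f : R -> R) : is_schwartz_R f -> exists D : nat -> R -> R,
  (forall y, D O y = f y) /\ (forall k y, is_derive (D k) y (D (S k) y)) /\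
  (forall k (L : nat), exists K, forall t, Rabs (D k t) * Rabs t ^ L <= K).
Proof.
  intros [D [H0 [H1 H2]]]. exists D. split; auto. split.
  intros; apply is_derive_Reals; auto.
  intros k L. destruct (H2 L k) as [K HK]. exists K. intros t. specialize (HK t).
  rewrite Rabs_mult, <- RPow_abs in HK. lra.
Qed.

Lemma sch_glob (D : R -> R) : (forall (L : nat), exists K, forall t, Rabs (D t) * Rabs t ^ L <= K) ->
  exists B, 0 <= B /\ forall t, Rabs (D t) <= B / (1 + t ^ 2).
Proof.
  intros H. destruct (H 0%nat) as [K0 H0]. destruct (H 2%nat) as [K2 H2].
  exists (K0 + K2). assert (Hp : forall t, 0 < 1 + t ^ 2) by (intro t; pose proof (pow2_ge_0 t); lra).
  split. specialize (H0 0); specialize (H2 0). simpl in *. rewrite Rabs_R0 in H2. pose proof (Rabs_pos (D 0)). nra.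
  intros t. specialize (H0 t); specialize (H2 t). simpl in H0, H2.
  rewrite <- (Rsqr_abs t) in H2 || idtac.
  assert (E : Rabs t * (Rabs t * 1) = t ^ 2) by (simpl; rewrite Rmult_1_r, <- Rabs_mult, Rabs_right; [ring| apply Rle_ge; nra]).
  rewrite E in H2. apply Rmult_le_reg_r with (1 + t ^ 2); auto. unfold Rdiv. rewrite Rmult_assoc, Rinv_l. lra.
  specialize (Hp t); lra.
Qed.

Lemma sch_tail (D : R -> R) : (forall (L : nat), exists K, forall t, Rabs (D t) * Rabs t ^ L <= K) ->
  forall (L : nat), exists K, 0 <= K /\ forall t X, 0 < X -> X / 2 <= Rabs t ->
     Rabs (D t) <= K * Rpower X (- INR L) / (1 + t ^ 2).
Proof.
  intros H L. destruct (H L) as [K0 H0]. destruct (H (L + 2)%nat) as [K2 H2].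
  assert (Hp : forall t, 0 < 1 + t ^ 2) by (intro t; pose proof (pow2_ge_0 t); lra).
  assert (K0p : 0 <= K0 + K2).
  { specialize (H0 0); specialize (H2 0). rewrite Rabs_R0 in *. rewrite pow_ne_zero in H2 by lia.
    pose proof (Rabs_pos (D 0)). pose proof (pow_le 0 L (Rle_refl 0)). nra. }
  exists ((K0 + K2) * 2 ^ L). split. apply Rmult_le_pos; auto. apply pow_le; lra.
  intros t X HX Ht. specialize (H0 t); specialize (H2 t).
  rewrite pow_add in H2.
  assert (E : Rabs t ^ 2 = t ^ 2) by (simpl; rewrite Rmult_1_r, <- Rabs_mult, Rabs_right; [ring| apply Rle_ge; nra]).
  rewrite E in H2.
  assert (A : Rabs (D t) * (1 + t ^ 2) * Rabs t ^ L <= K0 + K2) by nra.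
  assert (P : 0 < (X / 2) ^ L) by (apply pow_lt; lra).
  assert (Q : (X / 2) ^ L <= Rabs t ^ L) by (apply pow_incr; lra).
  pose proof (Rabs_pos (D t)). specialize (Hp t).
  assert (A2 : Rabs (D t) * (1 + t ^ 2) * (X / 2) ^ L <= K0 + K2).
  { eapply Rle_trans; [|apply A]. apply Rmult_le_compat_l; auto. apply Rmult_le_pos; lra. }
  rewrite Rpower_Ropp, Rpower_pow by auto.
  replace ((K0 + K2) * 2 ^ L * / X ^ L / (1 + t ^ 2)) with ((K0 + K2) / ((1 + t ^ 2) * (X / 2) ^ L)).
  apply Rmult_le_reg_r with ((1 + t ^ 2) * (X / 2) ^ L). apply Rmult_lt_0_compat; auto.
  unfold Rdiv. rewrite Rmult_assoc, Rinv_l. lra. apply Rgt_not_eq, Rmult_lt_0_compat; auto.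
  unfold Rdiv. rewrite Rpow_mult_distr, pow_inv. field. repeat split; try lra; apply pow_nonzero; lra.
Qed.

Lemma cont0 (f : R -> R) : f 0 = 0 -> (forall y, Rabs y < 1 -> Rabs (f y) <= 2 * Rabs y) -> continuous f 0.
Proof.
  intros H0 H. apply continuity_pt_filterlim. unfold continuity_pt, continue_in, limit1_in, limit_in.
  intros eps Heps. exists (Rmin 1 (eps / 4)). split. apply Rmin_pos; lra.
  intros x [_ Hx]. simpl in *. unfold R_dist in *. rewrite H0. rewrite Rminus_0_r in *.
  pose proof (Rmin_l 1 (eps / 4)). pose proof (Rmin_r 1 (eps / 4)).
  specialize (H x ltac:(lra)). lra.
Qed.

Lemma rp_le_base r p : 0 < r -> r <= 1 -> 1 <= p -> Rpower r p <= r.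
Proof.
  intros H1 H2 H3. unfold Rpower. rewrite <- (exp_ln r) at 2 by auto.
  assert (ln r <= 0) by (rewrite <- ln_1; apply ln_le; lra).
  assert (p * ln r <= ln r) by nra.
  destruct (Rle_lt_or_eq_dec _ _ H0). left; apply exp_increasing; auto. rewrite e; lra.
Qed.

Lemma sinpi_ge0 p n : 2 * INR n <= p <= 2 * INR n + 1 -> 0 <= sin (PI * p).
Proof.
  intros H. replace (PI * p) with (PI * (p - 2 * INR n) + 2 * INR n * PI) by ring.
  rewrite sin_period. pose proof PI_RGT_0. apply sin_ge_0; nra.
Qed.

Section U.
Variable p : R.
Hypothesis hp1 : 1 <= p.

Definition w1 y := fst (cpow p y).
Definition w2 y := snd (cpow p y).

Lemma w_small y : Rabs y < 1 -> Rabs (w1 y) <= 2 * Rabs y /\ Rabs (w2 y) <= 2 * Rabs y.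
Proof.
  intros Hy. unfold w1, w2, cpow, Cmul, Cexp; simpl.
  destruct (Rlt_dec 0 y) as [H|H]; simpl.
  - rewrite Rabs_R0. pose proof (rp_le_base y p H). rewrite Rabs_right by (left; apply rp_pos).
    rewrite Rabs_right by lra. split; try lra. assert (y <= 1) by (apply Rabs_def2 in Hy; lra). specialize (H0 H1 hp1). lra.
  - destruct (Rlt_dec y 0) as [H'|H']; simpl.
    + rewrite exp_0. assert (Rpower (- y) p <= - y) by (apply rp_le_base; auto; apply Rabs_def2 in Hy; lra).
      pose proof (rp_pos (- y) p). rewrite (Rabs_left y) by lra.
      pose proof (COS_bound (PI * p)). pose proof (SIN_bound (PI * p)).
      set (R := Rpower (- y) p) in *. set (cc := cos (PI * p)) in *. set (ss := sin (PI * p)) in *.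
      split; apply Rabs_le; split.
      all: try (assert (cc * R <= R) by nra; assert (- R <= cc * R) by nra; lra).
      all: try (assert (ss * R <= R) by nra; assert (- R <= ss * R) by nra; lra).
    + rewrite Rabs_R0. assert (y = 0) by lra. subst. rewrite Rabs_R0. lra.
Qed.

Lemma w_cont y : continuous w1 y /\ continuous w2 y.
Proof.
  destruct (Rtotal_order y 0) as [H|[H|H]].
  - assert (L : locally y (fun t => t < 0)) by (apply open_lt; auto).
    assert (D1 : forall t, t < 0 -> w1 t = exp 0 * cos (PI * p) * Rpower (- t) p - exp 0 * sin (PI * p) * 0).
    { intros t Ht. unfold w1, cpow. destruct (Rlt_dec 0 t); [lra|]. destruct (Rlt_dec t 0); [|lra]. reflexivity. }
    assert (D2 : forall t, t < 0 -> w2 t = exp 0 * cos (PI * p) * 0 + exp 0 * sin (PI * p) * Rpower (- t) p).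
    { intros t Ht. unfold w2, cpow. destruct (Rlt_dec 0 t); [lra|]. destruct (Rlt_dec t 0); [|lra]. reflexivity. }
    assert (Dr : ex_derive (fun t => Rpower (- t) p) y).
    { eexists. apply (dcomp (fun z => Rpower z p) (fun t => - t)). apply dpower. lra.
      eapply deq. apply (is_derive_opp (K:=R_AbsRing) (V:=R_NormedModule) (fun t => t)). apply did. reflexivity. }
    split.
    + eapply continuous_ext_loc. eapply filter_imp; [|exact L]. intros t Ht; symmetry; apply D1; auto.
      apply exd_cont. apply exd_minus. apply exd_scal. auto. eexists; apply dconst.
    + eapply continuous_ext_loc. eapply filter_imp; [|exact L]. intros t Ht; symmetry; apply D2; auto.
      apply exd_cont. apply exd_plus. eexists; apply dconst. apply exd_scal. auto.
  - subst. split; apply cont0.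
    + unfold w1, cpow. destruct (Rlt_dec 0 0); [lra|]. destruct (Rlt_dec 0 0); [lra|]. reflexivity.
    + intros; apply w_small; auto.
    + unfold w2, cpow. destruct (Rlt_dec 0 0); [lra|]. destruct (Rlt_dec 0 0); [lra|]. reflexivity.
    + intros; apply w_small; auto.
  - assert (L : locally y (fun t => 0 < t)) by (apply open_gt; auto).
    split.
    + eapply continuous_ext_loc. eapply filter_imp; [|exact L].
      intros t Ht. unfold w1, cpow. destruct (Rlt_dec 0 t); [|lra]. simpl. reflexivity.
      apply exd_cont. eexists. apply dpower; auto.
    + eapply continuous_ext_loc. eapply filter_imp; [|exact L].
      intros t Ht. unfold w2, cpow. destruct (Rlt_dec 0 t); [|lra]. simpl. reflexivity.
      apply exd_cont. eexists. apply dconst.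
Qed.

Lemma u_cont y : continuous (fun t => fst (u_p p t)) y /\ continuous (fun t => snd (u_p p t)) y.
Proof.
  destruct (w_cont y) as [C1 C2]. unfold u_p, Cexp, Cmul, Ci. simpl.
  fold (w1 y). 
  change (fun t => exp (0 * fst (cpow p t) - 1 * snd (cpow p t)) * cos (0 * snd (cpow p t) + 1 * fst (cpow p t)))
    with (fun t => exp (0 * w1 t - 1 * w2 t) * cos (0 * w2 t + 1 * w1 t)).
  change (fun t => exp (0 * fst (cpow p t) - 1 * snd (cpow p t)) * sin (0 * snd (cpow p t) + 1 * fst (cpow p t)))
    with (fun t => exp (0 * w1 t - 1 * w2 t) * sin (0 * w2 t + 1 * w1 t)).
  assert (A : continuous (fun t => 0 * w1 t - 1 * w2 t) y).
  { apply cminus; apply cmult; auto; apply (continuous_const (U:=R_UniformSpace) (V:=R_UniformSpace)). }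
  assert (B : continuous (fun t => 0 * w2 t + 1 * w1 t) y).
  { apply cplus; apply cmult; auto; apply (continuous_const (U:=R_UniformSpace) (V:=R_UniformSpace)). }
  split; apply cmult.
  apply continuous_exp_comp; auto. apply continuous_cos_comp; auto.
  apply continuous_exp_comp; auto. apply continuous_sin_comp; auto.
Qed.

End U.

Lemma u_pos_form p y : 0 < y -> u_p p y = (cos (1 * Rpower (1 * y) p), sin (1 * Rpower (1 * y) p)).
Proof.
  intros H. unfold u_p, cpow. destruct (Rlt_dec 0 y); [|lra].
  unfold Cexp, Cmul, Ci; simpl. rewrite !Rmult_1_l.
  replace (0 * Rpower y p - 0) with 0 by ring. replace (0 * 0 + Rpower y p) with (Rpower y p) by ring.
  rewrite exp_0, !Rmult_1_l. reflexivity.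
Qed.

Lemma u_neg_form p y : y < 0 -> u_p p y =
  (exp (- (sin (PI * p) * Rpower (- y) p)) * cos (cos (PI * p) * Rpower (- y) p),
   exp (- (sin (PI * p) * Rpower (- y) p)) * sin (cos (PI * p) * Rpower (- y) p)).
Proof.
  intros H. unfold u_p, cpow. destruct (Rlt_dec 0 y); [lra|]. destruct (Rlt_dec y 0); [|lra].
  unfold Cexp, Cmul, Ci; simpl. rewrite exp_0.
  f_equal; f_equal; f_equal; ring.
Qed.

Lemma u_bound p y : 0 <= sin (PI * p) -> Rabs (fst (u_p p y)) <= 1 /\ Rabs (snd (u_p p y)) <= 1.
Proof.
  intros Hs. destruct (Rtotal_order y 0) as [H|[H|H]].
  - rewrite u_neg_form by auto. simpl.
    assert (exp (- (sin (PI * p) * Rpower (- y) p)) <= 1).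
    { rewrite <- exp_0. pose proof (rp_pos (- y) p).
      destruct (Rle_lt_or_eq_dec 0 (sin (PI * p))) as [h|h]; auto.
      left; apply exp_increasing; nra. rewrite <- h; right; f_equal; ring. }
    pose proof (exp_pos (- (sin (PI * p) * Rpower (- y) p))).
    rewrite !Rabs_mult, (Rabs_right (exp _)) by lra.
    pose proof (Rabs_pos (cos (cos (PI * p) * Rpower (- y) p))). pose proof (Rabs_pos (sin (cos (PI * p) * Rpower (- y) p))).
    assert (Rabs (cos (cos (PI * p) * Rpower (- y) p)) <= 1) by (apply Rabs_le, COS_bound).
    assert (Rabs (sin (cos (PI * p) * Rpower (- y) p)) <= 1) by (apply Rabs_le, SIN_bound).
    split; nra.
  - subst. unfold u_p, cpow. destruct (Rlt_dec 0 0); [lra|]. destruct (Rlt_dec 0 0); [lra|].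
    unfold Cexp, Cmul, Ci, C0; simpl. replace (0 * 0 - 1 * 0) with 0 by ring. replace (0 * 0 + 1 * 0) with 0 by ring.
    rewrite exp_0, cos_0, sin_0. split; apply Rabs_le; lra.
  - rewrite u_pos_form by auto. simpl. split; apply Rabs_le; [apply COS_bound | apply SIN_bound].
Qed.

Lemma ig_form (U P : Cx) A y xi : U = (cos A, sin A) ->
  fst (Cmul (Cmul U (Cconj P)) (Cexp (0, - (y * xi)))) = cos (A - y * xi) * fst P + sin (A - y * xi) * snd P /\
  snd (Cmul (Cmul U (Cconj P)) (Cexp (0, - (y * xi)))) = sin (A - y * xi) * fst P - cos (A - y * xi) * snd P.
Proof.
  intros ->. destruct P as [p1 p2]. unfold Cmul, Cconj, Cexp; simpl. rewrite exp_0.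
  replace (A - y * xi) with (A + - (y * xi)) by ring. rewrite cos_plus, sin_plus. split; ring.
Qed.

Lemma sg_cases sg : sg * sg = 1 -> sg = 1 \/ sg = -1.
Proof. intros H. assert ((sg - 1) * (sg + 1) = 0) by nra. apply Rmult_integral in H0. lra. Qed.

Definition lo x := Rmin (x / 2) (2 * x).
Definition hi x := Rmax (x / 2) (2 * x).

Lemma lohi sg x : sg * sg = 1 -> 0 < sg * x ->
  lo x <= hi x /\ (forall y, lo x <= y <= hi x -> Rabs x / 2 <= sg * y <= 2 * Rabs x) /\
  Rabs x / 2 <= Rabs (lo x - x) /\ Rabs x / 2 <= Rabs (hi x - x) /\
  (forall y, y <= lo x \/ hi x <= y -> Rabs x / 2 <= Rabs (y - x)).
Proof.
  intros H1 H2. unfold lo, hi. destruct (sg_cases sg H1); subst.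
  - rewrite Rmin_left, Rmax_right, Rabs_right by lra.
    split; [lra|]. split; [intros; lra|]. split; [rewrite Rabs_left by lra; lra|].
    split; [rewrite Rabs_right by lra; lra|].
    intros y [Hy|Hy]; [rewrite Rabs_left1 by lra | rewrite Rabs_right by lra]; lra.
  - rewrite Rmin_right, Rmax_left, Rabs_left by lra.
    split; [lra|]. split; [intros; lra|]. split; [rewrite Rabs_left by lra; lra|].
    split; [rewrite Rabs_right by lra; lra|].
    intros y [Hy|Hy]; [rewrite Rabs_left by lra | rewrite Rabs_right by lra]; lra.
Qed.

Section Fin.
Variable p : R.
Hypothesis hp : 2 < p.
Variables (phi : R -> Cx) (D1 D2 : nat -> R -> R).
Hypothesis h10 : forall y, D1 O y = fst (phi y).
Hypothesis h20 : forall y, D2 O y = snd (phi y).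
Hypothesis h1d : forall k y, is_derive (D1 k) y (D1 (S k) y).
Hypothesis h2d : forall k y, is_derive (D2 k) y (D2 (S k) y).
Hypothesis h1b : forall k (L : nat), exists K, forall t, Rabs (D1 k t) * Rabs t ^ L <= K.
Hypothesis h2b : forall k (L : nat), exists K, forall t, Rabs (D2 k t) * Rabs t ^ L <= K.

Definition F1 x xi y := fst (Cmul (Cmul (u_p p y) (Cconj (phi (y - x)))) (Cexp (0, - (y * xi)))).
Definition F2 x xi y := snd (Cmul (Cmul (u_p p y) (Cconj (phi (y - x)))) (Cexp (0, - (y * xi)))).

Definition MID sg c := forall L : nat, exists C X1, 1 <= X1 /\ 0 <= C /\ forall x xi, 0 < sg * x ->
  Rabs xi <= c * Rabs x -> X1 <= Rabs x ->
  Rabs (RInt (F1 x xi) (lo x) (hi x)) <= C * Rpower (Rabs x) (- INR L) /\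
  Rabs (RInt (F2 x xi) (lo x) (hi x)) <= C * Rpower (Rabs x) (- INR L).

Lemma hX_ok c : 0 <= c -> forall r, (2 * exp ((4 * c / p) / (p - 2)) + 2) / 2 <= r ->
   2 * c * r <= p / 2 * Rpower r (p - 1).
Proof.
  intros hc r Hr. set (q := (4 * c / p) / (p - 2)) in *.
  pose proof (exp_pos q).
  assert (Hr0 : 0 < r) by lra.
  assert (Lq : q <= ln r). { rewrite <- (ln_exp q). apply ln_le; auto. lra. }
  assert (E : Rpower r (p - 1) = Rpower r (p - 2) * r).
  { replace (p - 1) with ((p - 2) + 1) by ring. rewrite Rpower_plus, Rpower_1; auto. }
  assert (E2 : 1 + (p - 2) * ln r <= Rpower r (p - 2)) by (unfold Rpower; apply exp_ineq1_le).
  assert (E3 : (p - 2) * q = 4 * c / p) by (unfold q; field; lra).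
  assert (E4 : 4 * c / p <= (p - 2) * ln r) by (rewrite <- E3; apply Rmult_le_compat_l; lra).
  rewrite E.
  assert (p / 2 * (1 + 4 * c / p) = p / 2 + 2 * c) by (field; lra).
  assert (p / 2 * (1 + 4 * c / p) <= p / 2 * Rpower r (p - 2)) by (apply Rmult_le_compat_l; lra).
  nra.
Qed.

Lemma mid_osc sg c ep : sg * sg = 1 -> 0 <= c -> ep * ep = 1 ->
  (forall y, 0 < sg * y -> u_p p y = (cos (ep * Rpower (sg * y) p), sin (ep * Rpower (sg * y) p))) ->
  MID sg c.
Proof.
  intros hsg hc hep hu L.
  set (X0 := 2 * exp ((4 * c / p) / (p - 2)) + 2).
  assert (hX0 : 2 <= X0) by (unfold X0; pose proof (exp_pos ((4 * c / p) / (p - 2))); lra).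
  pose proof (hX_ok c hc) as hX. fold X0 in hX.
  destruct (Qall p sg ep c X0 D1 hp hsg hep h1d hc hX0 hX h1b (S L) 0%nat 0%nat 0) as [C1 [HC1 Q1]].
  destruct (Qall p sg ep c X0 D2 hp hsg hep h2d hc hX0 hX h2b (S L) 0%nat 0%nat 0) as [C2 [HC2 Q2]].
  exists (C1 + C2), X0. split. lra. split. lra.
  intros x xi Hx Hxi HX.
  destruct (lohi sg x hsg Hx) as (K1 & K2 & K3 & K4 & _).
  assert (Hc : cfg sg c X0 x xi (lo x) (hi x)) by (unfold cfg; split; [lra|]; split; [lra|]; split; [lra|]; split; [exact K2|]; split; lra).
  assert (Hr := cfg_reg p sg ep c X0 hp hsg hep hc hX0 hX x xi _ _ Hc).
  destruct (Q1 x xi _ _ Hc) as [A1 B1]. destruct (Q2 x xi _ _ Hc) as [A2 B2].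
  replace (0 - INR 0 * (p - 1) + 1 - INR (S L)) with (- INR L) in A1, A2, B1, B2 by (rewrite S_INR; simpl; ring).
  assert (Emo : forall D y, 0 < sg * y -> Mo p sg ep D 0 0 0 x xi y = D O (y - x)).
  { intros D y Hy. unfold Mo. rewrite Rpower_O by auto. simpl; ring. }
  assert (Hin : forall y, Rmin (lo x) (hi x) < y < Rmax (lo x) (hi x) -> 0 < sg * y).
  { intros y Hy. rewrite Rmin_left, Rmax_right in Hy by lra. destruct (K2 y ltac:(lra)). lra. }
  split.
  - rewrite (RInt_ext' (F1 x xi) (fun y => cos (th p sg ep xi y) * Mo p sg ep D1 0 0 0 x xi y
        + sin (th p sg ep xi y) * Mo p sg ep D2 0 0 0 x xi y)).
    rewrite RInt_plus'. eapply Rle_trans. apply Rabs_triang. lra.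
    apply exR_cMo; auto. apply exR_sMo; auto.
    intros y Hy. specialize (Hin y Hy). unfold F1. rewrite (proj1 (ig_form _ (phi (y - x)) _ y xi (hu y Hin))).
    rewrite !Emo, h10, h20 by auto. unfold th. reflexivity.
  - rewrite (RInt_ext' (F2 x xi) (fun y => sin (th p sg ep xi y) * Mo p sg ep D1 0 0 0 x xi y
        - cos (th p sg ep xi y) * Mo p sg ep D2 0 0 0 x xi y)).
    rewrite RInt_minus'. eapply Rle_trans. apply Rabs_triang. rewrite Rabs_Ropp. lra.
    apply exR_sMo; auto. apply exR_cMo; auto.
    intros y Hy. specialize (Hin y Hy). unfold F2. rewrite (proj2 (ig_form _ (phi (y - x)) _ y xi (hu y Hin))).
    rewrite !Emo, h10, h20 by auto. unfold th. reflexivity.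
Qed.

Lemma F_cont x xi : Cont (F1 x xi) /\ Cont (F2 x xi).
Proof.
  assert (Hp1 : 1 <= p) by lra.
  assert (P1 : forall y, continuous (fun t => fst (phi (t - x))) y).
  { intros y. eapply continuous_ext_loc. apply filter_forall. intros t. apply h10.
    apply exd_cont. eexists. apply (dcomp (D1 O) (fun t => t - x)). apply h1d.
    eapply deq. apply dminus. apply did. apply dconst. reflexivity. }
  assert (P2 : forall y, continuous (fun t => snd (phi (t - x))) y).
  { intros y. eapply continuous_ext_loc. apply filter_forall. intros t. apply h20.
    apply exd_cont. eexists. apply (dcomp (D2 O) (fun t => t - x)). apply h2d.
    eapply deq. apply dminus. apply did. apply dconst. reflexivity. }
  assert (E1 : forall y, continuous (fun t => fst (Cexp (0, - (t * xi)))) y).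
  { intros y. simpl. apply cmult. apply (continuous_const (U:=R_UniformSpace) (V:=R_UniformSpace)).
    apply continuous_cos_comp. apply copp. apply cmult. apply (continuous_id (U:=R_UniformSpace)).
    apply (continuous_const (U:=R_UniformSpace) (V:=R_UniformSpace)). }
  assert (E2 : forall y, continuous (fun t => snd (Cexp (0, - (t * xi)))) y).
  { intros y. simpl. apply cmult. apply (continuous_const (U:=R_UniformSpace) (V:=R_UniformSpace)).
    apply continuous_sin_comp. apply copp. apply cmult. apply (continuous_id (U:=R_UniformSpace)).
    apply (continuous_const (U:=R_UniformSpace) (V:=R_UniformSpace)). }
  split; intros y; destruct (u_cont p Hp1 y);
    destruct (cont_integrand (u_p p) (fun t => phi (t - x)) (fun t => Cexp (0, - (t * xi))) y); auto.
Qed.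

Lemma sum_ge_last (f : nat -> R) n : (forall k, 0 <= f k) -> f n <= sum_f_R0 f n.
Proof.
  intros H. assert (P : forall m, 0 <= sum_f_R0 f m).
  { induction m; simpl. apply H. pose proof (H (S m)). lra. }
  destruct n. simpl; lra. simpl. pose proof (P n). lra.
Qed.

Lemma poly_exp (m : nat) s : 0 < s -> exists C, 0 < C /\ forall z, 0 <= z -> z ^ m <= C * exp (s * z).
Proof.
  intros Hs. exists (INR (Factorial.fact m) / s ^ m). split.
  apply Rdiv_lt_0_compat. apply lt_0_INR, Factorial.lt_O_fact. apply pow_lt; auto.
  intros z Hz. pose proof (exp_ge_taylor (s * z) m ltac:(nra)) as T.
  pose proof (sum_ge_last (fun k => (s * z) ^ k / INR (Factorial.fact k)) m) as S.
  assert (0 < INR (Factorial.fact m)) by apply lt_0_INR, Factorial.lt_O_fact.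
  assert (Hk : forall k, 0 <= (s * z) ^ k / INR (Factorial.fact k)).
  { intros k. apply Rmult_le_pos. apply pow_le; nra. left; apply Rinv_0_lt_compat, lt_0_INR, Factorial.lt_O_fact. }
  specialize (S Hk). simpl in S.
  assert (E : (s * z) ^ m / INR (Factorial.fact m) <= exp (s * z)) by lra.
  rewrite Rpow_mult_distr in E.
  assert (0 < s ^ m) by (apply pow_lt; auto).
  apply Rmult_le_reg_l with (s ^ m / INR (Factorial.fact m)). apply Rdiv_lt_0_compat; auto.
  replace (s ^ m / INR (Factorial.fact m) * (INR (Factorial.fact m) / s ^ m * exp (s * z))) with (exp (s * z)) by (field; lra).
  replace (s ^ m / INR (Factorial.fact m) * z ^ m) with (s ^ m * z ^ m / INR (Factorial.fact m)) by (field; lra). lra.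
Qed.

Lemma rp_ge_base r q : 1 <= r -> 1 <= q -> r <= Rpower r q.
Proof.
  intros H1 H2. unfold Rpower. rewrite <- (exp_ln r) at 1 by lra.
  assert (0 <= ln r) by (rewrite <- ln_1; apply ln_le; lra).
  assert (ln r <= q * ln r) by nra.
  destruct (Rle_lt_or_eq_dec _ _ H0). left; apply exp_increasing; auto. right; f_equal; exact e.
Qed.

Lemma mid_dec c : 0 < sin (PI * p) -> MID (-1) c.
Proof.
  intros Hs L. set (s := sin (PI * p)) in *.
  destruct (sch_glob (D1 O) (h1b O)) as [B1 [HB1 G1]].
  destruct (sch_glob (D2 O) (h2b O)) as [B2 [HB2 G2]].
  destruct (poly_exp (S L) (s / 2) ltac:(lra)) as [C' [HC' PE]].
  exists (3 * (B1 + B2) * C'), 2. split. lra. split. apply Rmult_le_pos; lra.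
  intros x xi Hx Hxi HX.
  assert (hsg : -1 * -1 = 1) by ring.
  destruct (lohi (-1) x hsg Hx) as (K1 & K2 & K3 & K4 & _).
  assert (Ax : Rabs x = - x) by (apply Rabs_left; lra).
  assert (Hlh : hi x - lo x = 3 / 2 * Rabs x) by (unfold hi, lo; rewrite Rmin_right, Rmax_left by lra; lra).
  set (W := exp (- (s * (Rabs x / 2)))).
  assert (HW : 0 < W) by apply exp_pos.
  assert (Pt : forall y, lo x <= y <= hi x ->
     Rabs (F1 x xi y) <= 2 * W * (B1 + B2) /\ Rabs (F2 x xi y) <= 2 * W * (B1 + B2)).
  { intros y Hy. destruct (K2 y Hy) as [Y1 Y2].
    assert (Hy0 : y < 0) by lra.
    assert (Ww : exp (- (s * Rpower (- y) p)) <= W).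
    { unfold W. assert (Rabs x / 2 <= Rpower (- y) p).
      { eapply Rle_trans; [| apply rp_ge_base]; lra. }
      destruct (Rle_lt_or_eq_dec _ _ H). left; apply exp_increasing; nra. rewrite e; lra. }
    pose proof (exp_pos (- (s * Rpower (- y) p))).
    assert (U1 : Rabs (fst (u_p p y)) <= W /\ Rabs (snd (u_p p y)) <= W).
    { rewrite u_neg_form by auto. simpl. fold s.
      rewrite !Rabs_mult, (Rabs_right (exp _)) by lra.
      assert (Rabs (cos (cos (PI * p) * Rpower (- y) p)) <= 1) by (apply Rabs_le, COS_bound).
      assert (Rabs (sin (cos (PI * p) * Rpower (- y) p)) <= 1) by (apply Rabs_le, SIN_bound).
      pose proof (Rabs_pos (cos (cos (PI * p) * Rpower (- y) p))). pose proof (Rabs_pos (sin (cos (PI * p) * Rpower (- y) p))).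
      split; nra. }
    assert (Ee : Rabs (fst (Cexp (0, - (y * xi)))) <= 1 /\ Rabs (snd (Cexp (0, - (y * xi)))) <= 1).
    { simpl. rewrite exp_0, !Rmult_1_l. split; apply Rabs_le; [apply COS_bound| apply SIN_bound]. }
    destruct U1, Ee.
    destruct (bound_integrand (u_p p y) (phi (y - x)) (Cexp (0, - (y * xi))) W ltac:(lra)) as [Z1 Z2]; auto.
    assert (Rabs (fst (phi (y - x))) + Rabs (snd (phi (y - x))) <= B1 + B2).
    { rewrite <- h10, <- h20. specialize (G1 (y - x)); specialize (G2 (y - x)).
      assert (0 < 1 + (y - x) ^ 2) by (pose proof (pow2_ge_0 (y - x)); lra).
      assert (B1 / (1 + (y - x) ^ 2) <= B1). { unfold Rdiv. pose proof (pow2_ge_0 (y - x)).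
        assert (/ (1 + (y - x) ^ 2) <= 1). { rewrite <- Rinv_1. apply Rinv_le_contravar; lra. } nra. }
      assert (B2 / (1 + (y - x) ^ 2) <= B2). { unfold Rdiv. pose proof (pow2_ge_0 (y - x)).
        assert (/ (1 + (y - x) ^ 2) <= 1). { rewrite <- Rinv_1. apply Rinv_le_contravar; lra. } nra. }
      lra. }
    unfold F1, F2. split; nra. }
  destruct (F_cont x xi) as [FC1 FC2].
  assert (Key : 3 / 2 * Rabs x * (2 * W * (B1 + B2)) <= 3 * (B1 + B2) * C' * Rpower (Rabs x) (- INR L)).
  { specialize (PE (Rabs x) ltac:(lra)). rewrite Rpower_Ropp, Rpower_pow by lra.
    assert (0 < Rabs x ^ L) by (apply pow_lt; lra).
    assert (EW : W * exp (s / 2 * Rabs x) = 1).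
    { unfold W. rewrite <- exp_plus. assert (EE : - (s * (Rabs x / 2)) + s / 2 * Rabs x = 0) by (unfold Rdiv; ring). rewrite EE. apply exp_0. }
    assert (Rabs x * W <= C' / Rabs x ^ L).
    { apply Rmult_le_reg_r with (Rabs x ^ L); auto. unfold Rdiv. replace (C' * / Rabs x ^ L * Rabs x ^ L) with C' by (field; lra).
      simpl in PE. nra. }
    unfold Rdiv in H0. nra. }
  split.
  - eapply Rle_trans. apply abs_RInt_le_const; auto. apply exR; auto.
    intros t Ht; apply (Pt t Ht). rewrite Hlh. lra.
  - eapply Rle_trans. apply abs_RInt_le_const; auto. apply exR; auto.
    intros t Ht; apply (Pt t Ht). rewrite Hlh. lra.
Qed.

Lemma rp_neg_le X (L : nat) : 1 <= X -> Rpower X (- INR L) <= 2 ^ L / (1 + X) ^ L.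
Proof.
  intros H. rewrite Rpower_Ropp, Rpower_pow by lra.
  assert (0 < X ^ L) by (apply pow_lt; lra). assert (0 < (1 + X) ^ L) by (apply pow_lt; lra).
  assert ((1 + X) ^ L <= 2 ^ L * X ^ L) by (rewrite <- Rpow_mult_distr; apply pow_incr; lra).
  apply Rmult_le_reg_r with ((1 + X) ^ L * X ^ L). nra.
  replace (/ X ^ L * ((1 + X) ^ L * X ^ L)) with ((1 + X) ^ L) by (field; lra).
  replace (2 ^ L / (1 + X) ^ L * ((1 + X) ^ L * X ^ L)) with (2 ^ L * X ^ L) by (field; lra). lra.
Qed.

Lemma decay_all sg c : sg * sg = 1 -> 0 <= c -> 0 <= sin (PI * p) -> MID sg c ->
  forall L : nat, exists C, 0 <= C /\ forall x xi, 0 < sg * x -> Rabs xi <= c * Rabs x ->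
   Rabs (Rint (F1 x xi)) <= C / (1 + Rabs x) ^ L /\ Rabs (Rint (F2 x xi)) <= C / (1 + Rabs x) ^ L.
Proof.
  intros hsg hc hs HM L.
  destruct (HM L) as [Cm [X1 [HX1 [HCm HMm]]]].
  destruct (sch_tail (D1 O) (h1b O) L) as [T1 [HT1 GT1]].
  destruct (sch_tail (D2 O) (h2b O) L) as [T2 [HT2 GT2]].
  destruct (sch_glob (D1 O) (h1b O)) as [B1 [HB1 G1]].
  destruct (sch_glob (D2 O) (h2b O)) as [B2 [HB2 G2]].
  set (CA := (Cm + 16 * (T1 + T2)) * 2 ^ L).
  set (CB := 16 * (B1 + B2) * (1 + X1) ^ L).
  assert (HCA : 0 <= CA) by (unfold CA; apply Rmult_le_pos; [lra| apply pow_le; lra]).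
  assert (HCB : 0 <= CB) by (unfold CB; apply Rmult_le_pos; [lra| apply pow_le; lra]).
  exists (CA + CB). split. lra.
  intros x xi Hx Hxi.
  destruct (F_cont x xi) as [FC1 FC2].
  destruct (lohi sg x hsg Hx) as (K1 & K2 & K3 & K4 & K5).
  assert (Hxa : 0 < Rabs x) by (destruct (sg_cases sg hsg); subst; [rewrite Rabs_right|rewrite Rabs_left]; lra).
  assert (Hpos : forall t, 0 < 1 + t ^ 2) by (intro t; pose proof (pow2_ge_0 t); lra).
  assert (PB : forall y (w : R), 0 <= w -> Rabs (fst (phi (y - x))) + Rabs (snd (phi (y - x))) <= w ->
     Rabs (F1 x xi y) <= 2 * w /\ Rabs (F2 x xi y) <= 2 * w).
  { intros y w Hw Hp. destruct (u_bound p y hs).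
    assert (Ee : Rabs (fst (Cexp (0, - (y * xi)))) <= 1 /\ Rabs (snd (Cexp (0, - (y * xi)))) <= 1).
    { simpl. rewrite exp_0, !Rmult_1_l. split; apply Rabs_le; [apply COS_bound| apply SIN_bound]. }
    destruct Ee.
    destruct (bound_integrand (u_p p y) (phi (y - x)) (Cexp (0, - (y * xi))) 1 ltac:(lra)) as [Z1 Z2]; auto.
    unfold F1, F2. split; nra. }
  assert (GB : forall y, Rabs (F1 x xi y) <= 2 * (B1 + B2) / (1 + (y - x) ^ 2) /\
                         Rabs (F2 x xi y) <= 2 * (B1 + B2) / (1 + (y - x) ^ 2)).
  { intros y. replace (2 * (B1 + B2) / (1 + (y - x) ^ 2)) with (2 * ((B1 + B2) / (1 + (y - x) ^ 2))) by (field; specialize (Hpos (y - x)); lra).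
    apply PB. apply Rmult_le_pos. lra. left; apply Rinv_0_lt_compat; auto.
    rewrite <- h10, <- h20. specialize (G1 (y - x)); specialize (G2 (y - x)). unfold Rdiv in *. lra. }
  set (E := 2 * (T1 + T2) * Rpower (Rabs x) (- INR L)).
  assert (HE : 0 <= E) by (unfold E; apply Rmult_le_pos; [lra| left; apply rp_pos]).
  assert (TB : forall y, y <= lo x \/ hi x <= y -> Rabs (F1 x xi y) <= E / (1 + (y - x) ^ 2) /\
                         Rabs (F2 x xi y) <= E / (1 + (y - x) ^ 2)).
  { intros y Hy. specialize (K5 y Hy).
    replace (E / (1 + (y - x) ^ 2)) with (2 * ((T1 + T2) * Rpower (Rabs x) (- INR L) / (1 + (y - x) ^ 2))) by
      (unfold E; field; specialize (Hpos (y - x)); lra).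
    apply PB. apply Rmult_le_pos. apply Rmult_le_pos. lra. left; apply rp_pos. left; apply Rinv_0_lt_compat; auto.
    rewrite <- h10, <- h20. specialize (GT1 (y - x) (Rabs x) Hxa K5). specialize (GT2 (y - x) (Rabs x) Hxa K5).
    unfold Rdiv in *. lra. }
  assert (Hq : 0 < (1 + Rabs x) ^ L) by (apply pow_lt; lra).
  destruct (Rle_lt_dec X1 (Rabs x)) as [Hbig|Hsmall].
  - destruct (HMm x xi Hx Hxi Hbig) as [M1 M2].
    pose proof (imp_main (F1 x xi) x (2 * (B1 + B2)) E (lo x) (hi x) FC1 K1 HE ltac:(lra) (fun y => proj1 (GB y)) (fun y Hy => proj1 (TB y Hy))) as I1.
    pose proof (rp_neg_le (Rabs x) L ltac:(lra)) as R.
    assert (Hrp : 0 < Rpower (Rabs x) (- INR L)) by apply rp_pos.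
    assert (Fin : forall v w, Rabs (v - w) <= 8 * E -> Rabs w <= Cm * Rpower (Rabs x) (- INR L) -> Rabs v <= (CA + CB) / (1 + Rabs x) ^ L).
    { intros v w Hvw Hw. apply Rabs_le_between in Hvw. apply Rabs_le_between in Hw.
      assert (Rabs v <= (Cm + 16 * (T1 + T2)) * Rpower (Rabs x) (- INR L)) by (apply Rabs_le; unfold E in Hvw; lra).
      assert ((Cm + 16 * (T1 + T2)) * Rpower (Rabs x) (- INR L) <= CA / (1 + Rabs x) ^ L).
      { unfold CA. unfold Rdiv. rewrite Rmult_assoc. apply Rmult_le_compat_l. lra. exact R. }
      assert (0 <= CB / (1 + Rabs x) ^ L) by (apply Rmult_le_pos; [lra| left; apply Rinv_0_lt_compat; auto]).
      unfold Rdiv in *. lra. }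
    split; [apply (Fin _ _ I1 M1) | ].
    pose proof (imp_main (F2 x xi) x (2 * (B1 + B2)) E (lo x) (hi x) FC2 K1 HE ltac:(lra) (fun y => proj2 (GB y)) (fun y Hy => proj2 (TB y Hy))) as I2'.
    apply (Fin _ _ I2' M2).
  - assert (HB : 0 <= 2 * (B1 + B2)) by lra.
    pose proof (imp_main (F1 x xi) x (2 * (B1 + B2)) (2 * (B1 + B2)) x x FC1 (Rle_refl x) HB HB (fun y => proj1 (GB y)) (fun y _ => proj1 (GB y))) as I1.
    pose proof (imp_main (F2 x xi) x (2 * (B1 + B2)) (2 * (B1 + B2)) x x FC2 (Rle_refl x) HB HB (fun y => proj2 (GB y)) (fun y _ => proj2 (GB y))) as I2.
    rewrite RInt_point in I1, I2. 
    assert (PP : (1 + Rabs x) ^ L <= (1 + X1) ^ L) by (apply pow_incr; lra).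
    assert (Fin : forall v, Rabs (v - 0) <= 8 * (2 * (B1 + B2)) -> Rabs v <= (CA + CB) / (1 + Rabs x) ^ L).
    { intros v Hv. rewrite Rminus_0_r in Hv.
      assert (16 * (B1 + B2) <= CB / (1 + Rabs x) ^ L).
      { unfold CB. apply Rmult_le_reg_r with ((1 + Rabs x) ^ L); auto.
        replace (16 * (B1 + B2) * (1 + X1) ^ L / (1 + Rabs x) ^ L * (1 + Rabs x) ^ L) with (16 * (B1 + B2) * (1 + X1) ^ L) by (field; lra).
        apply Rmult_le_compat_l; lra. }
      assert (0 <= CA / (1 + Rabs x) ^ L) by (apply Rmult_le_pos; [lra| left; apply Rinv_0_lt_compat; auto]).
      unfold Rdiv in *. lra. }
    split; [apply Fin; exact I1 | apply Fin; exact I2].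
Qed.

End Fin.

Lemma sq_lt a b e : 0 < e -> (a ^ 2 + b ^ 2 < e ^ 2) -> Rabs a < e.
Proof. intros He H. pose proof (pow2_ge_0 b). unfold Rabs; destruct (Rcase_abs a); nra. Qed.

Lemma cnorm_le a b : Cnorm (a, b) <= Rabs a + Rabs b.
Proof.
  unfold Cnorm; simpl. pose proof (Rabs_pos a). pose proof (Rabs_pos b).
  rewrite <- (sqrt_square (Rabs a + Rabs b)) by lra. apply sqrt_le_1_alt.
  assert (a * (a * 1) = Rabs a * Rabs a) by (rewrite <- Rabs_mult, Rabs_right; [ring| apply Rle_ge; nra]).
  assert (b * (b * 1) = Rabs b * Rabs b) by (rewrite <- Rabs_mult, Rabs_right; [ring| apply Rle_ge; nra]).
  simpl. nra.
Qed.

Theorem proposition8p2 (p : R) (n : nat)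
  (hp : 2 < p) (hn1 : 2 * INR n <= p) (hn2 : p <= 2 * INR n + 1)
  (phi : R -> Cx) (hphi : is_schwartz phi) (hphi0 : exists x, phi x <> C0)
  (x0 xi0 : R) :
  in_WF phi (u_p p) x0 xi0 -> x0 = 0 /\ xi0 <> 0.
Proof.
  intros [Hne Hno].
  destruct (Req_dec x0 0) as [H0|H0].
  { split; auto. intro Hxi; apply Hne; subst; reflexivity. }
  exfalso. apply Hno.
  destruct hphi as [S1 S2].
  destruct (sch_data _ S1) as [D1 [h10 [h1d h1b]]].
  destruct (sch_data _ S2) as [D2 [h20 [h2d h2b]]].
  assert (hs : 0 <= sin (PI * p)) by (apply sinpi_ge0 with n; lra).
  assert (Hsg : exists sg, sg * sg = 1 /\ 0 < sg * x0 /\ (sg = 1 \/ sg = -1)).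
  { destruct (Rlt_dec 0 x0). exists 1; split; [ring|]; split; [lra| auto].
    exists (-1); split; [ring|]; split; [lra| auto]. }
  destruct Hsg as [sg [hsg [hsx hsc]]].
  set (c := Rabs xi0 / Rabs x0 + 1).
  assert (Hx0a : 0 < Rabs x0) by (apply Rabs_pos_lt; auto).
  assert (hc : 0 <= c) by (unfold c; pose proof (Rabs_pos xi0); assert (0 <= Rabs xi0 / Rabs x0) by (apply Rmult_le_pos; [lra| left; apply Rinv_0_lt_compat; lra]); lra).
  assert (HM : MID p phi sg c).
  { destruct hsc as [E|E]; subst sg.
    - apply (mid_osc p hp phi D1 D2 h10 h20 h1d h2d h1b h2b 1 c 1); auto; try ring.
      intros y Hy. apply u_pos_form. lra.
    - destruct (Rle_lt_or_eq_dec 0 (sin (PI * p)) hs) as [Hs|Hs].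
      + apply (mid_dec p hp phi D1 D2 h10 h20 h1d h2d h1b h2b c Hs).
      + apply (mid_osc p hp phi D1 D2 h10 h20 h1d h2d h1b h2b (-1) c (cos (PI * p))); auto; try ring.
        pose proof (sin2_cos2 (PI * p)). rewrite <- Hs in H. unfold Rsqr in H. lra.
        intros y Hy. rewrite u_neg_form by lra. rewrite <- Hs.
        replace (-1 * y) with (- y) by ring. rewrite Rmult_0_l, Ropp_0, exp_0, !Rmult_1_l. reflexivity. }
  assert (Habs : forall x, 0 < sg * x -> Rabs x = sg * x).
  { intros x Hx. destruct hsc; subst; [rewrite Rabs_right | rewrite Rabs_left]; lra. }
  exists (fun x xi => 0 < sg * x /\ Rabs xi < c * (sg * x)).
  split; [|split].
  - split; [|split].
    + intros x xi [Hx _] E. inversion E. subst. lra.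
    + intros x xi [Hx Hxi]. exists (Rmin (sg * x) ((c * (sg * x) - Rabs xi) / (1 + c))).
      assert (0 < (c * (sg * x) - Rabs xi) / (1 + c)) by (apply Rdiv_lt_0_compat; lra).
      split. apply Rmin_pos; lra.
      intros y eta Hd. set (e := Rmin (sg * x) ((c * (sg * x) - Rabs xi) / (1 + c))) in *.
      assert (He : 0 < e) by (apply Rmin_pos; lra).
      pose proof (Rmin_l (sg * x) ((c * (sg * x) - Rabs xi) / (1 + c))).
      pose proof (Rmin_r (sg * x) ((c * (sg * x) - Rabs xi) / (1 + c))). fold e in H1, H2.
      assert (A1 : Rabs (y - x) < e) by (apply sq_lt with (eta - xi); auto).
      assert (A2 : Rabs (eta - xi) < e) by (apply sq_lt with (y - x); auto; lra).
      assert (A3 : Rabs (sg * y - sg * x) < e).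
      { replace (sg * y - sg * x) with (sg * (y - x)) by ring. rewrite Rabs_mult, (abs1 sg hsg). lra. }
      apply Rabs_def2 in A3. pose proof (Rabs_triang_inv eta xi).
      assert (e * (1 + c) <= c * (sg * x) - Rabs xi).
      { apply Rmult_le_reg_r with (/ (1 + c)). apply Rinv_0_lt_compat; lra.
        rewrite Rmult_assoc, Rinv_r by lra. unfold Rdiv in H2. lra. }
      split. lra. nra.
    + intros x xi t [Hx Hxi] Ht. split. nra. rewrite Rabs_mult, Rabs_right by lra. nra.
  - split. auto. rewrite <- (Habs x0 hsx). unfold c.
    assert ((Rabs xi0 / Rabs x0 + 1) * Rabs x0 = Rabs xi0 + Rabs x0) by (field; lra). lra.
  - intros N HN.
    destruct (nfloor_ex N HN) as [m [Hm1 Hm2]].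
    set (L := S m).
    assert (HL : N <= INR L) by (unfold L; rewrite S_INR; lra).
    destruct (decay_all p hp phi D1 D2 h10 h20 h1d h2d h1b h2b sg c hsg hc hs HM L) as [C [HC HD]].
    exists ((1 + c) ^ L * (2 * C)).
    intros x xi [Hx Hxi].
    assert (Hxi' : Rabs xi <= c * Rabs x) by (rewrite (Habs x Hx); lra).
    destruct (HD x xi Hx Hxi') as [B1 B2].
    assert (ES : STFT phi (u_p p) x xi = (Rint (F1 p phi x xi), Rint (F2 p phi x xi))) by reflexivity.
    rewrite ES.
    pose proof (cnorm_le (Rint (F1 p phi x xi)) (Rint (F2 p phi x xi))) as CN.
    set (J := japan x xi).
    assert (J1 : 1 <= J).
    { unfold J, japan. apply Rle_trans with (sqrt 1). rewrite sqrt_1; lra. apply sqrt_le_1_alt. pose proof (pow2_ge_0 x). pose proof (pow2_ge_0 xi). lra. }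
    pose proof (Rabs_pos x).
    assert (J2 : J <= (1 + c) * (1 + Rabs x)).
    { unfold J, japan. rewrite <- (sqrt_square ((1 + c) * (1 + Rabs x))) by nra. apply sqrt_le_1_alt.
      assert (xi ^ 2 <= (c * Rabs x) ^ 2).
      { rewrite <- (pow2_abs xi). apply pow_incr. split. apply Rabs_pos. auto. }
      rewrite <- (pow2_abs x) in *. nra. }
    assert (P1 : Rpower J N <= ((1 + c) * (1 + Rabs x)) ^ L).
    { apply Rle_trans with (Rpower ((1 + c) * (1 + Rabs x)) N). apply Rle_Rpower_l. auto. split; lra.
      rewrite <- Rpower_pow by nra. apply Rle_Rpower; auto. nra. }
    assert (Hq : 0 < (1 + Rabs x) ^ L) by (apply pow_lt; lra).
    assert (CN2 : Cnorm (Rint (F1 p phi x xi), Rint (F2 p phi x xi)) <= 2 * C / (1 + Rabs x) ^ L).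
    { unfold Rdiv in *. lra. }
    assert (0 <= Cnorm (Rint (F1 p phi x xi), Rint (F2 p phi x xi))) by (unfold Cnorm; apply sqrt_pos).
    assert (0 < Rpower J N) by apply rp_pos.
    eapply Rle_trans. apply Rmult_le_compat; try lra. exact P1. exact CN2.
    rewrite Rpow_mult_distr. right. field. lra.
Qed.
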